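(* Let $X$ be a real Hilbert space, let $U,V$ be closed affine subspaces of $X$ (not necessarily intersecting), let $T:=T_{U,V}$, $v:=P_{\overline{\operatorname{ran}}(\mathrm{Id}-T)}0$, and assume $v\in\operatorname{ran}(\mathrm{Id}-T)$. Let $x\in X$. Then for every $n\in\mathbb N$, $$P_UT^nx=P_U(T^nx+nv)=P_U((T_{-v})^nx)=P_U(T_{U,v+V}^nx)=J_{-v+N_U}((T_{-v})^nx),$$ and $P_UT^nx\to P_{U\cap(v+V)}x$ as $n\to\infty$ (in norm). Moreover, if $\operatorname{par}U+\operatorname{par}V$ is closed (e.g. if $X$ is finite-dimensional), then the convergence is linear with rate $c_F(\operatorname{par}U,\operatorname{par}V)<1$, i.e. $\big(c_F^{-n}\|P_UT^nx-P_{U\cap(v+V)}x\|\big)_n$ is bounded.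
   Context: $T_{U,V}:=\mathrm{Id}-P_U+P_V(2P_U-\mathrm{Id})$ (Douglas–Rachford operator for the normal cones of $U,V$); $v$ equals $P_{\overline{U-V}}0$. $T_{-v}x:=T(x+v)$. $J_{-v+N_U}:=(\mathrm{Id}+N_U-v)^{-1}$. $\operatorname{par}U:=U-U$. With $W:=\operatorname{par}U\cap\operatorname{par}V$ and $\mathbb B$ the closed unit ball, the cosine of the Friedrichs angle is $c_F(\operatorname{par}U,\operatorname{par}V):=\sup\{|\langle u,w\rangle|: u\in\operatorname{par}U\cap W^\perp\cap\mathbb B,\ w\in\operatorname{par}V\cap W^\perp\cap\mathbb B\}$. *)

(* Defs.v *)
From Stdlib Require Import Reals Lra ClassicalEpsilon.
Open Scope R_scope.

Record HilbertSpace := {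
  carrier :> Type;
  hzero : carrier;
  hadd : carrier -> carrier -> carrier;
  hopp : carrier -> carrier;
  hscal : R -> carrier -> carrier;
  hinner : carrier -> carrier -> R;
  hadd_assoc : forall x y z, hadd x (hadd y z) = hadd (hadd x y) z;
  hadd_comm : forall x y, hadd x y = hadd y x;
  hadd_0 : forall x, hadd x hzero = x;
  hadd_opp : forall x, hadd x (hopp x) = hzero;
  hscal_1 : forall x, hscal 1 x = x;
  hscal_assoc : forall a b x, hscal a (hscal b x) = hscal (a * b) x;
  hscal_distr_l : forall a x y, hscal a (hadd x y) = hadd (hscal a x) (hscal a y);
  hscal_distr_r : forall a b x, hscal (a + b) x = hadd (hscal a x) (hscal b x);
  hinner_sym : forall x y, hinner x y = hinner y x;
  hinner_add_l : forall x y z, hinner (hadd x y) z = hinner x z + hinner y z;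
  hinner_scal_l : forall a x y, hinner (hscal a x) y = a * hinner x y;
  hinner_pos : forall x, 0 <= hinner x x;
  hinner_def : forall x, hinner x x = 0 -> x = hzero;
  hcomplete : forall u : nat -> carrier,
    (forall eps, eps > 0 -> exists N, forall m n, (m >= N)%nat -> (n >= N)%nat ->
        sqrt (hinner (hadd (u m) (hopp (u n))) (hadd (u m) (hopp (u n)))) < eps) ->
    exists l, forall eps, eps > 0 -> exists N, forall n, (n >= N)%nat ->
        sqrt (hinner (hadd (u n) (hopp l)) (hadd (u n) (hopp l))) < eps
}.

Arguments hzero {X} : rename.
Arguments hadd {X} : rename.
Arguments hopp {X} : rename.
Arguments hscal {X} : rename.
Arguments hinner {X} : rename.

Section HilbertDefs.
Variable X : HilbertSpace.

Definition hsub (x y : X) : X := hadd x (hopp y).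
Definition hnorm (x : X) : R := sqrt (hinner x x).

Definition converges (u : nat -> X) (l : X) : Prop :=
  forall eps, eps > 0 -> exists N, forall n, (n >= N)%nat -> hnorm (hsub (u n) l) < eps.

Definition is_closed (C : X -> Prop) : Prop :=
  forall (u : nat -> X) l, (forall n, C (u n)) -> converges u l -> C l.

Definition closure (C : X -> Prop) : X -> Prop :=
  fun x => exists u : nat -> X, (forall n, C (u n)) /\ converges u x.

Definition is_affine (C : X -> Prop) : Prop :=
  forall x y t, C x -> C y -> C (hadd (hscal t x) (hscal (1 - t) y)).

Definition closed_affine (C : X -> Prop) : Prop :=
  (exists x, C x) /\ is_affine C /\ is_closed C.

(* metric projection P_C x: the (unique, when C is nonempty closed convex)
   nearest point of C to x *)
Definition proj (C : X -> Prop) (x : X) : X :=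
  epsilon (inhabits hzero)
    (fun p => C p /\ forall c, C c -> hnorm (hsub x p) <= hnorm (hsub x c)).

Definition DR (U V : X -> Prop) (x : X) : X :=
  hadd (hsub x (proj U x)) (proj V (hsub (hscal 2 (proj U x)) x)).

Definition translate (v : X) (V : X -> Prop) : X -> Prop :=
  fun y => exists w, V w /\ y = hadd v w.

Definition inter (A B : X -> Prop) : X -> Prop := fun x => A x /\ B x.

Definition ran_Id_minus (T : X -> X) : X -> Prop :=
  fun y => exists z, y = hsub z (T z).

(* T_{-v} x := T (x + v) *)
Definition Tshift (T : X -> X) (v : X) (x : X) : X := T (hadd x v).

Definition normal_cone (U : X -> Prop) (x u : X) : Prop :=
  U x /\ forall c, U c -> hinner u (hsub c x) <= 0.

(* resolvent J_{-v + N_U} = (Id + N_U - v)^{-1}: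
   z = J y  iff  y \in z + N_U(z) - v  iff  y - z + v \in N_U(z) *)
Definition resolvent_shift (v : X) (U : X -> Prop) (y : X) : X :=
  epsilon (inhabits hzero) (fun z => normal_cone U z (hadd (hsub y z) v)).

Definition par (U : X -> Prop) : X -> Prop :=
  fun d => exists a b, U a /\ U b /\ d = hsub a b.

Definition msum (A B : X -> Prop) : X -> Prop :=
  fun d => exists a b, A a /\ B b /\ d = hadd a b.

Definition orth_compl (W : X -> Prop) : X -> Prop :=
  fun u => forall w, W w -> hinner u w = 0.

Definition cF_set (A B : X -> Prop) : R -> Prop :=
  fun r => exists u w,
    A u /\ orth_compl (inter A B) u /\ hnorm u <= 1 /\
    B w /\ orth_compl (inter A B) w /\ hnorm w <= 1 /\
    r = Rabs (hinner u w).

Definition cF (A B : X -> Prop) : R :=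
  epsilon (inhabits 0) (fun c => is_lub (cF_set A B) c).

End HilbertDefs.

Arguments hsub {X}.
Arguments hnorm {X}.
Arguments converges {X}.
Arguments is_closed {X}.
Arguments closure {X}.
Arguments is_affine {X}.
Arguments closed_affine {X}.
Arguments proj {X}.
Arguments DR {X}.
Arguments translate {X}.
Arguments inter {X}.
Arguments ran_Id_minus {X}.
Arguments Tshift {X}.
Arguments normal_cone {X}.
Arguments resolvent_shift {X}.
Arguments par {X}.
Arguments msum {X}.
Arguments orth_compl {X}.
Arguments cF_set {X}.
Arguments cF {X}.

(* Main.v *)
Require Import Defs.
From Stdlib Require Import Reals Lra Psatz ClassicalEpsilon Classical.
Open Scope R_scope.


Arguments hadd_assoc {_}. Arguments hadd_comm {_}. Arguments hadd_0 {_}.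
Arguments hadd_opp {_}. Arguments hscal_1 {_}. Arguments hscal_assoc {_}.
Arguments hscal_distr_l {_}. Arguments hscal_distr_r {_}. Arguments hinner_sym {_}.
Arguments hinner_add_l {_}. Arguments hinner_scal_l {_}. Arguments hinner_pos {_}.
Arguments hinner_def {_}. Arguments hcomplete {_}.

Section Basic.
Context {X : HilbertSpace}.
Implicit Types x y z : X.

Lemma hadd_0l x : hadd hzero x = x.
Proof. rewrite hadd_comm; apply hadd_0. Qed.

Lemma hadd_oppl x : hadd (hopp x) x = hzero.
Proof. rewrite hadd_comm; apply hadd_opp. Qed.

Lemma inner_add_r x y z : hinner x (hadd y z) = hinner x y + hinner x z.
Proof. rewrite hinner_sym, hinner_add_l, (hinner_sym y), (hinner_sym z); ring. Qed.

Lemma inner_scal_r a x y : hinner x (hscal a y) = a * hinner x y.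
Proof. rewrite hinner_sym, hinner_scal_l, hinner_sym; ring. Qed.

Lemma inner_zero_l y : hinner hzero y = 0.
Proof.
  assert (H : hinner (hadd hzero hzero) y = hinner hzero y) by (rewrite hadd_0; auto).
  rewrite hinner_add_l in H; lra.
Qed.

Lemma inner_zero_r y : hinner y hzero = 0.
Proof. rewrite hinner_sym; apply inner_zero_l. Qed.

Lemma inner_opp_l x y : hinner (hopp x) y = - hinner x y.
Proof.
  assert (H : hinner (hadd x (hopp x)) y = 0) by (rewrite hadd_opp; apply inner_zero_l).
  rewrite hinner_add_l in H; lra.
Qed.

Lemma inner_opp_r x y : hinner x (hopp y) = - hinner x y.
Proof. rewrite hinner_sym, inner_opp_l, hinner_sym; auto. Qed.

Lemma inner_sub_l x y z : hinner (hsub x y) z = hinner x z - hinner y z.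
Proof. unfold hsub; rewrite hinner_add_l, inner_opp_l; ring. Qed.

Lemma inner_sub_r x y z : hinner z (hsub x y) = hinner z x - hinner z y.
Proof. unfold hsub; rewrite inner_add_r, inner_opp_r; ring. Qed.

Lemma hsub_eq0 x y : hsub x y = hzero -> x = y.
Proof.
  unfold hsub; intro H.
  assert (E : hadd (hadd x (hopp y)) y = hadd hzero y) by (rewrite H; auto).
  rewrite <- hadd_assoc, hadd_oppl, hadd_0, hadd_0l in E; auto.
Qed.

Lemma veq_intro x y : hinner (hsub x y) (hsub x y) = 0 -> x = y.
Proof. intro H; apply hsub_eq0, hinner_def, H. Qed.

End Basic.

#[global] Hint Rewrite @hinner_add_l @inner_add_r @hinner_scal_l @inner_scal_r
  @inner_opp_l @inner_opp_r @inner_zero_l @inner_zero_r @inner_sub_l @inner_sub_r : ip.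

Ltac iexp := autorewrite with ip.
Ltac vring := apply veq_intro; iexp; ring.

Section Basic2.
Context {X : HilbertSpace}.
Implicit Types x y z : X.

Definition nsq (x : X) := hinner x x.

Lemma nsq_nonneg x : 0 <= nsq x.
Proof. apply hinner_pos. Qed.

Lemma nsq_eq0 x : nsq x = 0 -> x = hzero.
Proof. apply hinner_def. Qed.

Lemma nsq_zero : nsq (@hzero X) = 0.
Proof. unfold nsq; iexp; auto. Qed.

Lemma test_vring (a b : X) (t : R) :
  hadd (hscal t a) (hscal (1 - t) b) = hadd b (hscal t (hsub a b)).
Proof. vring. Qed.

Lemma CS x y : (hinner x y)^2 <= nsq x * nsq y.
Proof.
  destruct (Req_dec (nsq y) 0) as [H0|H0].
  - apply nsq_eq0 in H0; subst y; unfold nsq; iexp; nra.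
  - assert (Hp : 0 < nsq y) by (pose proof (nsq_nonneg y); lra).
    pose proof (nsq_nonneg (hsub (hscal (nsq y) x) (hscal (hinner x y) y))) as H.
    unfold nsq in *; autorewrite with ip in H.
    rewrite (hinner_sym y x) in H.
    assert (E : hinner y y * (hinner y y * hinner x x - hinner x y * hinner x y) >= 0) by nra.
    nra.
Qed.

Lemma hnorm_nonneg x : 0 <= hnorm x.
Proof. apply sqrt_pos. Qed.

Lemma hnorm_sq x : hnorm x * hnorm x = nsq x.
Proof. apply sqrt_sqrt, nsq_nonneg. Qed.

Lemma norm_le_of_sq x b : 0 <= b -> nsq x <= b * b -> hnorm x <= b.
Proof.
  intros Hb H. unfold hnorm. rewrite <- (sqrt_square b) by auto.
  apply sqrt_le_1_alt; auto.
Qed.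

Lemma norm_lt_of_sq x b : 0 < b -> nsq x < b * b -> hnorm x < b.
Proof.
  intros Hb H. unfold hnorm. rewrite <- (sqrt_square b) by lra.
  apply sqrt_lt_1_alt; split; auto; apply nsq_nonneg.
Qed.

Lemma sq_le_of_norm x b : hnorm x <= b -> nsq x <= b * b.
Proof.
  intro H. rewrite <- hnorm_sq. pose proof (hnorm_nonneg x).
  apply Rmult_le_compat; auto.
Qed.

Lemma sq_lt_of_norm x b : hnorm x < b -> nsq x < b * b.
Proof.
  intro H. rewrite <- hnorm_sq. pose proof (hnorm_nonneg x). nra.
Qed.

Lemma inner_le_norm x y : hinner x y <= hnorm x * hnorm y.
Proof.
  pose proof (CS x y). rewrite <- hnorm_sq, <- (hnorm_sq y) in H.
  pose proof (hnorm_nonneg x); pose proof (hnorm_nonneg y).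
  assert (0 <= hnorm x * hnorm y) by nra. nra.
Qed.

Lemma abs_inner_le_norm x y : Rabs (hinner x y) <= hnorm x * hnorm y.
Proof.
  apply Rabs_le; split.
  - pose proof (inner_le_norm (hopp x) y) as H. autorewrite with ip in H.
    assert (hnorm (hopp x) = hnorm x).
    { unfold hnorm; f_equal; iexp; ring. }
    rewrite H0 in H; lra.
  - apply inner_le_norm.
Qed.

Lemma norm_triangle x y : hnorm (hadd x y) <= hnorm x + hnorm y.
Proof.
  apply norm_le_of_sq.
  - pose proof (hnorm_nonneg x); pose proof (hnorm_nonneg y); lra.
  - pose proof (inner_le_norm x y). unfold nsq; iexp.
    rewrite (hinner_sym y x).
    pose proof (hnorm_sq x); pose proof (hnorm_sq y). unfold nsq in *. nra.
Qed.

Lemma norm_scal a x : hnorm (hscal a x) = Rabs a * hnorm x.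
Proof.
  unfold hnorm. replace (hinner (hscal a x) (hscal a x)) with ((a*a) * hinner x x)
    by (iexp; ring).
  rewrite sqrt_mult_alt by nra. f_equal.
  apply sqrt_Rsqr_abs.
Qed.

Lemma norm_opp x : hnorm (hopp x) = hnorm x.
Proof. unfold hnorm; f_equal; iexp; ring. Qed.

Lemma norm_sub_sym x y : hnorm (hsub x y) = hnorm (hsub y x).
Proof. unfold hnorm; f_equal; iexp; ring. Qed.

Lemma norm_sub_triangle x y z : hnorm (hsub x z) <= hnorm (hsub x y) + hnorm (hsub y z).
Proof.
  replace (hsub x z) with (hadd (hsub x y) (hsub y z)) by vring.
  apply norm_triangle.
Qed.

End Basic2.

Section Basic3.
Context {X : HilbertSpace}.
Implicit Types x y z e f : X.

Lemma nsq_add e f : nsq (hadd e f) = nsq e + 2 * hinner e f + nsq f.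
Proof. unfold nsq; iexp; rewrite (hinner_sym f e); ring. Qed.

Lemma nsq_sub e f : nsq (hsub e f) = nsq e - 2 * hinner e f + nsq f.
Proof. unfold nsq; iexp; rewrite (hinner_sym f e); ring. Qed.

Lemma nsq_scal t e : nsq (hscal t e) = t * t * nsq e.
Proof. unfold nsq; iexp; ring. Qed.

Lemma nsq_opp e : nsq (hopp e) = nsq e.
Proof. unfold nsq; iexp; ring. Qed.

Lemma inner_self e : hinner e e = nsq e.
Proof. reflexivity. Qed.

End Basic3.


Lemma inv_small (eps : R) : eps > 0 -> exists N : nat, forall n, (n >= N)%nat -> / INR (S n) < eps.
Proof.
  intros He. destruct (INR_archimed eps 1 He) as [N HN].
  exists N. intros n Hn.
  assert (HI : INR N <= INR n) by (apply le_INR; lia).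
  rewrite S_INR.
  assert (0 < INR n + 1) by (pose proof (pos_INR n); lra).
  apply (Rmult_lt_reg_l (INR n + 1)); auto.
  rewrite Rinv_r by lra. nra.
Qed.

Section Proj.
Context {X : HilbertSpace}.
Implicit Types x y z : X.

Lemma norm_le_iff (a b : X) : hnorm a <= hnorm b <-> nsq a <= nsq b.
Proof.
  split; intro H.
  - rewrite <- hnorm_sq, <- (hnorm_sq b). pose proof (hnorm_nonneg a).
    apply Rmult_le_compat; auto.
  - unfold hnorm. apply sqrt_le_1_alt; auto.
Qed.

Lemma norm_lt_iff (a b : X) : hnorm a < hnorm b <-> nsq a < nsq b.
Proof.
  split; intro H.
  - rewrite <- hnorm_sq, <- (hnorm_sq b). pose proof (hnorm_nonneg a). nra.
  - unfold hnorm. apply sqrt_lt_1_alt; split; auto; apply nsq_nonneg.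
Qed.

Lemma nsq_hsub_self x : nsq (hsub x x) = 0.
Proof. unfold nsq; iexp; ring. Qed.

Lemma hnorm_hsub_self x : hnorm (hsub x x) = 0.
Proof. unfold hnorm. fold (nsq (hsub x x)). rewrite nsq_hsub_self. apply sqrt_0. Qed.

Lemma closure_incl (A : X -> Prop) (a : X) : A a -> closure A a.
Proof.
  intro Ha. exists (fun _ => a). split; auto.
  intros eps He. exists 0%nat. intros n _. rewrite hnorm_hsub_self. lra.
Qed.

Lemma closed_closure (A : X -> Prop) (a : X) : is_closed A -> closure A a -> A a.
Proof. intros HA [u [Hu Hc]]. exact (HA u a Hu Hc). Qed.

Lemma affine_seg (A : X -> Prop) (p c : X) t : is_affine A -> A p -> A c ->
  A (hadd p (hscal t (hsub c p))).
Proof.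
  intros HA Hp Hc. replace (hadd p (hscal t (hsub c p))) with
    (hadd (hscal t c) (hscal (1 - t) p)) by vring. apply HA; auto.
Qed.

Lemma affine_3 (A : X -> Prop) (a b c : X) : is_affine A -> A a -> A b -> A c ->
  A (hadd a (hsub b c)).
Proof.
  intros HA Ha Hb Hc.
  assert (Hm : A (hadd (hscal (1/2) a) (hscal (1 - 1/2) b))) by (apply HA; auto).
  replace (hadd a (hsub b c)) with
    (hadd (hscal 2 (hadd (hscal (1/2) a) (hscal (1 - 1/2) b))) (hscal (1 - 2) c)).
  - apply HA; auto.
  - apply veq_intro; iexp; field.
Qed.

Lemma nearest_orth (A : X -> Prop) (x p : X) : is_affine A -> A p ->
  (forall c, A c -> nsq (hsub x p) <= nsq (hsub x c)) ->
  forall c, A c -> hinner (hsub x p) (hsub c p) = 0.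
Proof.
  intros HA Hp Hmin c Hc.
  set (a := hinner (hsub x p) (hsub c p)).
  set (b := nsq (hsub c p)).
  assert (Hq : forall t, 0 <= - 2 * t * a + t * t * b).
  { intro t. pose proof (Hmin _ (affine_seg A p c t HA Hp Hc)) as H.
    replace (hsub x (hadd p (hscal t (hsub c p)))) with
      (hsub (hsub x p) (hscal t (hsub c p))) in H by vring.
    rewrite (nsq_sub (hsub x p) (hscal t (hsub c p))), nsq_scal, inner_scal_r in H.
    unfold a, b. nra. }
  assert (Hb : 0 <= b) by apply nsq_nonneg.
  pose proof (Hq (a / (b + 1))) as H.
  assert (E : - 2 * (a / (b + 1)) * a + a / (b + 1) * (a / (b + 1)) * b
              = - (a * a) * (b + 2) / ((b + 1) * (b + 1))) by (field; lra).
  rewrite E in H.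
  assert (Hd : 0 < (b + 1) * (b + 1)) by nra.
  assert (H2 : 0 <= - (a * a) * (b + 2)).
  { apply (Rmult_le_compat_r ((b+1)*(b+1))) in H; [|lra].
    unfold Rdiv in H. rewrite Rmult_assoc, Rinv_l in H by lra. lra. }
  nra.
Qed.

Definition nearest (C : X -> Prop) (x p : X) : Prop :=
  C p /\ forall c, C c -> hnorm (hsub x p) <= hnorm (hsub x c).

Lemma proj_spec (C : X -> Prop) x : (exists p, nearest C x p) -> nearest C x (proj C x).
Proof.
  intro H. unfold proj. apply epsilon_spec. exact H.
Qed.

Lemma proj_eq (C : X -> Prop) (x p : X) : C p ->
  (forall c, C c -> hinner (hsub x p) (hsub c p) = 0) -> proj C x = p.
Proof.
  intros Hp Ho.
  assert (Hn : nearest C x p).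
  { split; auto. intros c Hc. apply norm_le_iff.
    pose proof (Ho c Hc). pose proof (nsq_nonneg (hsub c p)).
    replace (hsub x c) with (hsub (hsub x p) (hsub c p)) by vring.
    rewrite (nsq_sub (hsub x p) (hsub c p)). lra. }
  destruct (proj_spec C x (ex_intro _ p Hn)) as [Hq Hq2].
  set (q := proj C x) in *.
  pose proof (Hq2 p Hp) as H1. apply norm_le_iff in H1.
  pose proof (Ho q Hq) as H2.
  symmetry. apply veq_intro.
  replace (hsub x q) with (hsub (hsub x p) (hsub q p)) in H1 by vring.
  rewrite (nsq_sub (hsub x p) (hsub q p)) in H1.
  pose proof (nsq_nonneg (hsub q p)).
  replace (hinner (hsub p q) (hsub p q)) with (nsq (hsub q p)) by (unfold nsq; iexp; ring).
  lra.
Qed.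

Lemma parallelogram (x a b : X) :
  nsq (hsub x (hadd (hscal (1/2) a) (hscal (1 - 1/2) b))) =
  (2 * nsq (hsub x a) + 2 * nsq (hsub x b) - nsq (hsub a b)) / 4.
Proof.
  unfold nsq; iexp. rewrite (hinner_sym a x), (hinner_sym b x), (hinner_sym b a). field.
Qed.

Lemma nearest_closure_exists (A : X -> Prop) x : (exists a, A a) -> is_affine A ->
  exists p, closure A p /\ forall c, closure A c -> hnorm (hsub x p) <= hnorm (hsub x c).
Proof.
  intros [a0 Ha0] HA.
  set (E := fun r => exists a, A a /\ r = - nsq (hsub x a)).
  assert (HEb : bound E).
  { exists 0. intros r [a [_ ->]]. pose proof (nsq_nonneg (hsub x a)). lra. }
  assert (HEn : exists r, E r) by (exists (- nsq (hsub x a0)); exists a0; auto).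
  destruct (completeness E HEb HEn) as [m [Hub Hleast]].
  set (d := - m).
  assert (Hd1 : forall a, A a -> d <= nsq (hsub x a)).
  { intros a Ha. assert (E (- nsq (hsub x a))) by (exists a; auto).
    apply Hub in H. unfold d; lra. }
  assert (Hd2 : forall eps, eps > 0 -> exists a, A a /\ nsq (hsub x a) < d + eps).
  { intros eps He. apply NNPP. intro Hn.
    assert (is_upper_bound E (m - eps)).
    { intros r [a [Ha ->]]. apply Rnot_lt_le. intro Hlt. apply Hn. exists a.
      split; auto. unfold d; lra. }
    apply Hleast in H. lra. }
  assert (Hseq : forall n : nat, exists a, A a /\ nsq (hsub x a) < d + / INR (S n)).
  { intro n. apply Hd2. apply Rinv_0_lt_compat, lt_0_INR; lia. }
  set (u := fun n => proj1_sig (constructive_indefinite_description _ (Hseq n))).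
  assert (Hu : forall n, A (u n) /\ nsq (hsub x (u n)) < d + / INR (S n)).
  { intro n. unfold u. destruct (constructive_indefinite_description _ (Hseq n)); auto. }
  assert (Hcau : forall n m, nsq (hsub (u n) (u m)) <= 2 * / INR (S n) + 2 * / INR (S m)).
  { intros n m'. destruct (Hu n) as [An Bn]. destruct (Hu m') as [Am Bm].
    assert (Hmid := Hd1 _ (HA (u n) (u m') (1/2) An Am)).
    rewrite (parallelogram x (u n) (u m')) in Hmid. lra. }
  destruct (hcomplete u) as [l Hl].
  { intros eps He.
    destruct (inv_small (eps * eps / 4)) as [N HN].
    { apply Rmult_gt_0_compat; [nra|lra]. }
    exists N. intros n m' Hn Hm. fold (hnorm (hsub (u n) (u m'))).
    apply norm_lt_of_sq; auto.
    pose proof (Hcau n m'). pose proof (HN n Hn). pose proof (HN m' Hm). fold (hsub (u n) (u m')). lra. }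
  assert (Hconv : converges u l) by exact Hl.
  exists l. split.
  - exists u. split; auto. intro n; apply Hu.
  - intros c [w [Hw Hwc]].
    apply Rnot_lt_le. intro Hlt.
    set (eps := (hnorm (hsub x l) - hnorm (hsub x c)) / 4).
    assert (He : eps > 0) by (unfold eps; lra).
    destruct (Hconv eps He) as [N1 HN1].
    destruct (Hwc eps He) as [N2 HN2].
    destruct (inv_small (eps * eps)) as [N3 HN3]; [nra|].
    set (n := (N1 + N3)%nat).
    pose proof (HN1 n ltac:(lia)) as H1.
    pose proof (HN2 N2 ltac:(lia)) as H2.
    pose proof (HN3 n ltac:(lia)) as H3.
    destruct (Hu n) as [_ H4].
    pose proof (Hd1 _ (Hw N2)) as H5.
    assert (H6 : hnorm (hsub x (u n)) < hnorm (hsub x (w N2)) + eps).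
    { apply norm_lt_of_sq. pose proof (hnorm_nonneg (hsub x (w N2))); lra.
      pose proof (hnorm_sq (hsub x (w N2))). pose proof (hnorm_nonneg (hsub x (w N2))).
      nra. }
    pose proof (norm_sub_triangle x (u n) l).
    pose proof (norm_sub_triangle x c (w N2)).
    rewrite norm_sub_sym in H2.
    unfold eps in *. lra.
Qed.

Lemma closed_affine_proj (C : X -> Prop) x : closed_affine C ->
  C (proj C x) /\ forall c, C c -> hinner (hsub x (proj C x)) (hsub c (proj C x)) = 0.
Proof.
  intros [Hne [HA Hcl]].
  destruct (nearest_closure_exists C x Hne HA) as [p [Hp Hpn]].
  assert (Hn : nearest C x p).
  { split. apply closed_closure; auto. intros c Hc. apply Hpn, closure_incl, Hc. }
  destruct (proj_spec C x (ex_intro _ p Hn)) as [Hq Hq2].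
  split; auto.
  apply nearest_orth; auto. intros c Hc. apply norm_le_iff, Hq2, Hc.
Qed.

Lemma closed_affine_proj_orth (C : X -> Prop) (x c d : X) : closed_affine C -> C c -> C d ->
  hinner (hsub x (proj C x)) (hsub c d) = 0.
Proof.
  intros HC Hc Hd. destruct (closed_affine_proj C x HC) as [_ H].
  pose proof (H c Hc). pose proof (H d Hd).
  replace (hsub c d) with (hsub (hsub c (proj C x)) (hsub d (proj C x))) by vring.
  rewrite inner_sub_r. lra.
Qed.

End Proj.


Record LinProj (X : HilbertSpace) := {
  lS : X -> Prop;
  lP : X -> X;
  lS0 : lS hzero;
  lSadd : forall a b, lS a -> lS b -> lS (hadd a b);
  lSscal : forall t a, lS a -> lS (hscal t a);
  lPin : forall y, lS (lP y);
  lPorth : forall y s, lS s -> hinner (hsub y (lP y)) s = 0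
}.
Arguments lS {X}. Arguments lP {X}. Arguments lS0 {X}. Arguments lSadd {X}.
Arguments lSscal {X}. Arguments lPin {X}. Arguments lPorth {X}.

Section LPtheory.
Context {X : HilbertSpace} (L : LinProj X).
Implicit Types a b s y w : X.
Notation S := (lS L).
Notation P := (lP L).

Lemma lSsub a b : S a -> S b -> S (hsub a b).
Proof.
  intros Ha Hb. replace (hsub a b) with (hadd a (hscal (-1) b)) by vring.
  apply lSadd; auto. apply lSscal; auto.
Qed.

Lemma lSopp a : S a -> S (hopp a).
Proof.
  intros Ha. replace (hopp a) with (hscal (-1) a) by vring. apply lSscal; auto.
Qed.

Lemma P_unique y p : S p -> (forall s, S s -> hinner (hsub y p) s = 0) -> P y = p.
Proof.
  intros Hp Ho. apply veq_intro.
  assert (He : S (hsub (P y) p)) by (apply lSsub; auto; apply lPin).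
  replace (hinner (hsub (P y) p) (hsub (P y) p)) with
    (hinner (hsub (hsub y p) (hsub y (P y))) (hsub (P y) p)) by (f_equal; vring).
  rewrite inner_sub_l, Ho, lPorth; auto. ring.
Qed.

Lemma hsub_self (x : X) : hsub x x = hzero.
Proof. vring. Qed.

Lemma P_idem s : S s -> P s = s.
Proof. intros Hs. apply P_unique; auto. intros s' _. rewrite hsub_self; iexp; ring. Qed.

Lemma P_add a b : P (hadd a b) = hadd (P a) (P b).
Proof.
  apply P_unique. apply lSadd; apply lPin.
  intros s Hs. replace (hsub (hadd a b) (hadd (P a) (P b))) with
    (hadd (hsub a (P a)) (hsub b (P b))) by vring.
  rewrite hinner_add_l, !lPorth; auto. ring.
Qed.

Lemma P_scal t a : P (hscal t a) = hscal t (P a).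
Proof.
  apply P_unique. apply lSscal; apply lPin.
  intros s Hs. replace (hsub (hscal t a) (hscal t (P a))) with
    (hscal t (hsub a (P a))) by vring.
  rewrite hinner_scal_l, lPorth; auto. ring.
Qed.

Lemma P_sub a b : P (hsub a b) = hsub (P a) (P b).
Proof.
  replace (hsub a b) with (hadd a (hscal (-1) b)) by vring.
  rewrite P_add, P_scal. vring.
Qed.

Lemma P_zero : P hzero = hzero.
Proof. apply P_idem, lS0. Qed.

Lemma P_perp w : (forall s, S s -> hinner w s = 0) -> P w = hzero.
Proof.
  intros H. apply P_unique. apply lS0.
  intros s Hs. replace (hsub w hzero) with w by vring. auto.
Qed.

Lemma inner_P_S a s : S s -> hinner (P a) s = hinner a s.
Proof.
  intros Hs. pose proof (lPorth L a s Hs). rewrite inner_sub_l in H. lra.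
Qed.

Lemma P_sa a b : hinner (P a) b = hinner a (P b).
Proof.
  rewrite (hinner_sym (P a) b).
  rewrite <- (inner_P_S b (P a)) by apply lPin.
  rewrite <- (inner_P_S a (P b)) by apply lPin.
  apply hinner_sym.
Qed.

Lemma Q_perp a s : S s -> hinner (hsub a (P a)) s = 0.
Proof. apply lPorth. Qed.

Lemma P_pyth y : nsq y = nsq (P y) + nsq (hsub y (P y)).
Proof.
  replace y with (hadd (P y) (hsub y (P y))) at 1 by vring.
  rewrite nsq_add. rewrite (hinner_sym (P y)), lPorth by apply lPin. ring.
Qed.

Lemma P_le y : nsq (P y) <= nsq y.
Proof. rewrite (P_pyth y). pose proof (nsq_nonneg (hsub y (P y))). lra. Qed.

Lemma Q_le y : nsq (hsub y (P y)) <= nsq y.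
Proof. rewrite (P_pyth y). pose proof (nsq_nonneg (P y)). lra. Qed.

Lemma Q_sa a b : hinner (hsub a (P a)) b = hinner a (hsub b (P b)).
Proof. rewrite inner_sub_l, inner_sub_r, P_sa. ring. Qed.

Lemma P_of_perp_Q a : P (hsub a (P a)) = hzero.
Proof. apply P_perp. intros s Hs. apply lPorth; auto. Qed.

End LPtheory.

Section Construct.
Context {X : HilbertSpace}.

Definition dirS (C : X -> Prop) (z : X) : X -> Prop := fun y => C (hadd z y).
Definition dirP (C : X -> Prop) (z : X) : X -> X := fun y => hsub (proj C (hadd z y)) z.

Lemma dir_S0 C z : C z -> dirS C z hzero.
Proof. intros Hz. unfold dirS. rewrite hadd_0. auto. Qed.

Lemma dir_Sadd C z a b : is_affine C -> C z -> dirS C z a -> dirS C z b -> dirS C z (hadd a b).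
Proof.
  unfold dirS. intros HA Hz Ha Hb.
  replace (hadd z (hadd a b)) with (hadd (hadd z a) (hsub (hadd z b) z)) by vring.
  apply affine_3; auto.
Qed.

Lemma dir_Sscal C z t a : is_affine C -> C z -> dirS C z a -> dirS C z (hscal t a).
Proof.
  unfold dirS. intros HA Hz Ha.
  replace (hadd z (hscal t a)) with (hadd z (hscal t (hsub (hadd z a) z))) by vring.
  apply affine_seg; auto.
Qed.

Lemma dir_Pin C z y : closed_affine C -> dirS C z (dirP C z y).
Proof.
  intros HC. unfold dirS, dirP.
  replace (hadd z (hsub (proj C (hadd z y)) z)) with (proj C (hadd z y)) by vring.
  apply (closed_affine_proj C _ HC).
Qed.

Lemma dir_Porth C z y s : closed_affine C -> C z -> dirS C z s ->
  hinner (hsub y (dirP C z y)) s = 0.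
Proof.
  intros HC Hz Hs. unfold dirS, dirP in *.
  replace (hsub y (hsub (proj C (hadd z y)) z)) with
    (hsub (hadd z y) (proj C (hadd z y))) by vring.
  assert (E : hinner (hsub (hadd z y) (proj C (hadd z y))) (hsub (hadd z s) z) = 0)
    by (apply closed_affine_proj_orth; auto).
  replace (hsub (hadd z s) z) with s in E by vring. exact E.
Qed.

Definition mkLP (C : X -> Prop) (z : X) (HC : closed_affine C) (Hz : C z) : LinProj X :=
  {| lS := dirS C z; lP := dirP C z;
     lS0 := dir_S0 C z Hz;
     lSadd := fun a b => dir_Sadd C z a b (proj1 (proj2 HC)) Hz;
     lSscal := fun t a => dir_Sscal C z t a (proj1 (proj2 HC)) Hz;
     lPin := fun y => dir_Pin C z y HC;
     lPorth := fun y s => dir_Porth C z y s HC Hz |}.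

Lemma proj_via_dir C z (HC : closed_affine C) (Hz : C z) y :
  proj C y = hadd z (lP (mkLP C z HC Hz) (hsub y z)).
Proof.
  simpl. unfold dirP. replace (hadd z (hsub y z)) with y by vring. vring.
Qed.

End Construct.


Section DRlin.
Context {X : HilbertSpace} (M N : LinProj X).
Implicit Types a b s y w f g : X.
Notation PM := (lP M).
Notation PN := (lP N).

Definition Tl (y : X) : X := hadd (hsub y (PM y)) (PN (hsub (hscal 2 (PM y)) y)).

Lemma Tl_decomp y : Tl y = hadd (PN (PM y)) (hsub (hsub y (PM y)) (PN (hsub y (PM y)))).
Proof.
  unfold Tl. replace (hsub (hscal 2 (PM y)) y) with (hsub (PM y) (hsub y (PM y))) by vring.
  rewrite (P_sub N). vring.
Qed.

Lemma Tl_comb (s t : R) a b : Tl (hadd (hscal s a) (hscal t b)) = hadd (hscal s (Tl a)) (hscal t (Tl b)).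
Proof.
  unfold Tl. rewrite (P_add M), !(P_scal M).
  replace (hsub (hscal 2 (hadd (hscal s (PM a)) (hscal t (PM b)))) (hadd (hscal s a) (hscal t b)))
    with (hadd (hscal s (hsub (hscal 2 (PM a)) a)) (hscal t (hsub (hscal 2 (PM b)) b))) by vring.
  rewrite (P_add N), !(P_scal N). vring.
Qed.

Lemma Tl_add a b : Tl (hadd a b) = hadd (Tl a) (Tl b).
Proof.
  replace (hadd a b) with (hadd (hscal 1 a) (hscal 1 b)) by vring. rewrite Tl_comb. vring.
Qed.

Lemma Tl_scal t a : Tl (hscal t a) = hscal t (Tl a).
Proof.
  replace (hscal t a) with (hadd (hscal t a) (hscal 0 a)) by vring. rewrite Tl_comb. vring.
Qed.

Lemma Tl_sub a b : Tl (hsub a b) = hsub (Tl a) (Tl b).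
Proof.
  replace (hsub a b) with (hadd (hscal 1 a) (hscal (-1) b)) by vring. rewrite Tl_comb. vring.
Qed.

Lemma Tl_zero : Tl hzero = hzero.
Proof. replace (@hzero X) with (hscal 0 (@hzero X)) by vring. rewrite Tl_scal. vring. Qed.

Lemma Tl_orth y : hinner (PN (PM y)) (hsub (hsub y (PM y)) (PN (hsub y (PM y)))) = 0.
Proof. rewrite hinner_sym. apply lPorth, lPin. Qed.

Lemma Tl_nsq y : nsq (Tl y) = nsq (PN (PM y)) + nsq (hsub (hsub y (PM y)) (PN (hsub y (PM y)))).
Proof. rewrite Tl_decomp, nsq_add, Tl_orth. ring. Qed.

Lemma Tl_firm y : hinner (Tl y) y = nsq (Tl y).
Proof.
  rewrite Tl_nsq, Tl_decomp.
  set (p := PM y). set (q := hsub y p).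
  assert (Ey : y = hadd p q) by (unfold q; vring).
  assert (Hpq : hinner q p = 0) by (unfold q, p; apply lPorth, lPin).
  assert (H1 : hinner (PN p) p = nsq (PN p)).
  { pose proof (lPorth N p (PN p) (lPin N p)). rewrite inner_sub_l in H.
    rewrite hinner_sym. unfold nsq. lra. }
  assert (H2 : hinner (hsub q (PN q)) q = nsq (hsub q (PN q))).
  { pose proof (lPorth N q (PN q) (lPin N q)).
    unfold nsq. rewrite (inner_sub_r q (PN q)). lra. }
  assert (H3 : hinner (PN p) q = hinner p (PN q)) by apply P_sa.
  assert (H4 : hinner (hsub q (PN q)) p = - hinner p (PN q)).
  { rewrite inner_sub_l, Hpq, (hinner_sym (PN q) p). ring. }
  rewrite Ey at 1. rewrite hinner_add_l, !inner_add_r. lra.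
Qed.

Lemma Tl_nonexp y : nsq (Tl y) <= nsq y.
Proof.
  rewrite Tl_nsq, (P_pyth M y).
  pose proof (P_le N (PM y)). pose proof (Q_le N (hsub y (PM y))). lra.
Qed.

Lemma Tl_sq_step y : nsq (hsub y (Tl y)) = nsq y - nsq (Tl y).
Proof. rewrite nsq_sub, (hinner_sym y), Tl_firm. ring. Qed.

Lemma Tl_fix y : Tl y = y -> PN (PM y) = PM y /\ PN (hsub y (PM y)) = hzero.
Proof.
  intros Hf.
  assert (E : nsq (Tl y) = nsq y) by (rewrite Hf; auto).
  rewrite Tl_nsq, (P_pyth M y) in E.
  pose proof (P_le N (PM y)) as H1. pose proof (Q_le N (hsub y (PM y))) as H2.
  pose proof (P_pyth N (PM y)) as H3. pose proof (P_pyth N (hsub y (PM y))) as H4.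
  pose proof (nsq_nonneg (hsub (PM y) (PN (PM y)))).
  pose proof (nsq_nonneg (PN (hsub y (PM y)))).
  split.
  - symmetry. apply veq_intro. fold (nsq (hsub (PM y) (PN (PM y)))). lra.
  - apply nsq_eq0. lra.
Qed.

Lemma Tl_fix_intro f : PN (PM f) = PM f -> PN (hsub f (PM f)) = hzero -> Tl f = f.
Proof. intros H1 H2. rewrite Tl_decomp, H1, H2. vring. Qed.

Lemma Tl_fix_inner f g : Tl f = f -> hinner (Tl g) f = hinner g f.
Proof.
  intros Hf. destruct (Tl_fix f Hf) as [Ha Hb].
  set (a := PM f) in *. set (b := hsub f a) in *.
  assert (Ef : f = hadd a b) by (unfold b; vring).
  assert (HMa : PM a = a) by (apply P_idem, lPin).
  assert (HMb : PM b = hzero) by (apply P_of_perp_Q).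
  rewrite Tl_decomp. rewrite Ef. rewrite hinner_add_l, !inner_add_r.
  rewrite (P_sa N (PM g) a), Ha, (P_sa M g a), HMa.
  rewrite (P_sa N (PM g) b), Hb, inner_zero_r.
  rewrite (Q_sa N (hsub g (PM g)) a).
  replace (hsub a (PN a)) with (@hzero X) by (rewrite Ha; vring). rewrite inner_zero_r.
  rewrite (Q_sa N (hsub g (PM g)) b), Hb.
  replace (hsub b hzero) with b by vring.
  rewrite (Q_sa M g b), HMb. replace (hsub b hzero) with b by vring. ring.
Qed.

Lemma perp_ran_fix w : (forall d, hinner w (hsub d (Tl d)) = 0) -> Tl w = w.
Proof.
  intros H. pose proof (H w) as Hw. rewrite inner_sub_r in Hw.
  pose proof (Tl_firm w) as Hf. rewrite hinner_sym in Hf.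
  apply veq_intro. fold (nsq (hsub (Tl w) w)). rewrite nsq_sub.
  rewrite (hinner_sym (Tl w) w). fold (nsq w) in Hw. lra.
Qed.

Definition Tn (n : nat) (y : X) : X := Nat.iter n Tl y.

Lemma Tn_S n y : Tn (S n) y = Tl (Tn n y).
Proof. reflexivity. Qed.

Lemma Tn_S' n y : Tn (S n) y = Tn n (Tl y).
Proof. unfold Tn. rewrite Nat.iter_succ_r. reflexivity. Qed.

Lemma Tn_sub n a b : Tn n (hsub a b) = hsub (Tn n a) (Tn n b).
Proof. induction n; simpl; auto. fold (Tn n (hsub a b)) (Tn n a) (Tn n b).
  rewrite IHn. apply Tl_sub. Qed.

Lemma Tn_add n a b : Tn n (hadd a b) = hadd (Tn n a) (Tn n b).
Proof. induction n; simpl; auto. fold (Tn n (hadd a b)) (Tn n a) (Tn n b).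
  rewrite IHn. apply Tl_add. Qed.

Lemma Tn_nonexp n y : nsq (Tn n y) <= nsq y.
Proof.
  induction n; simpl. lra. fold (Tn n y). pose proof (Tl_nonexp (Tn n y)). lra.
Qed.

Lemma Tn_fix n f : Tl f = f -> Tn n f = f.
Proof. intros Hf. induction n; simpl; auto. fold (Tn n f). rewrite IHn; auto. Qed.

Lemma Tn_perp n g : (forall f, Tl f = f -> hinner g f = 0) ->
  forall f, Tl f = f -> hinner (Tn n g) f = 0.
Proof.
  intros Hg. induction n; intros f Hf; simpl; auto. fold (Tn n g).
  rewrite Tl_fix_inner; auto.
Qed.

Lemma asym_reg z n : INR (S n) * nsq (hsub (Tn n z) (Tn (S n) z)) <= nsq z.
Proof.
  assert (Hstep : forall k, nsq (hsub (Tn k z) (Tn (S k) z)) = nsq (Tn k z) - nsq (Tn (S k) z)).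
  { intro k. rewrite Tn_S. apply Tl_sq_step. }
  assert (Hmono : forall k, nsq (hsub (Tn (S k) z) (Tn (S (S k)) z)) <= nsq (hsub (Tn k z) (Tn (S k) z))).
  { intro k. rewrite (Tn_S (S k)), (Tn_S k). rewrite <- Tl_sub. apply Tl_nonexp. }
  assert (Hind : forall n, INR (S n) * nsq (hsub (Tn n z) (Tn (S n) z)) + nsq (Tn (S n) z) <= nsq z).
  { induction n0.
    - simpl INR. rewrite Hstep. simpl. lra.
    - rewrite S_INR. pose proof (Hmono n0). pose proof (Hstep (S n0)).
      pose proof (nsq_nonneg (hsub (Tn (S n0) z) (Tn (S (S n0)) z))).
      pose proof (pos_INR (S n0)).
      assert (INR (S n0) * nsq (hsub (Tn (S n0) z) (Tn (S (S n0)) z))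
              <= INR (S n0) * nsq (hsub (Tn n0 z) (Tn (S n0) z))) by (apply Rmult_le_compat_l; auto).
      lra. }
  pose proof (Hind n). pose proof (nsq_nonneg (Tn (S n) z)). lra.
Qed.

End DRlin.


Section Conv.
Context {X : HilbertSpace}.
Implicit Types a b s y w f g r : X.

Lemma converges_inner (u : nat -> X) l r : converges u l -> (forall n, hinner (u n) r = 0) ->
  hinner l r = 0.
Proof.
  intros Hc H0. destruct (Req_dec (hinner l r) 0) as [Hz|Hne]; auto. exfalso.
  assert (Hpos : 0 < Rabs (hinner l r)) by (apply Rabs_pos_lt; auto).
  set (A := Rabs (hinner l r)) in *.
  pose proof (hnorm_nonneg r).
  set (eps := A / (hnorm r + 1)).
  assert (He : eps > 0) by (unfold eps; apply Rdiv_lt_0_compat; lra).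
  assert (Heq : eps * (hnorm r + 1) = A) by (unfold eps; field; lra).
  destruct (Hc eps He) as [N HN]. pose proof (HN N (le_n N)) as HNN.
  assert (E : A = Rabs (hinner (hsub (u N) l) r)).
  { unfold A. rewrite inner_sub_l, H0, Rminus_0_l, Rabs_Ropp. auto. }
  pose proof (abs_inner_le_norm (hsub (u N) l) r) as H2.
  pose proof (hnorm_nonneg (hsub (u N) l)).
  assert (hnorm (hsub (u N) l) * hnorm r <= eps * hnorm r) by (apply Rmult_le_compat_r; lra).
  nra.
Qed.

Lemma closure_affine (A : X -> Prop) : is_affine A -> is_affine (closure A).
Proof.
  intros HA x y t [u [Hu Hux]] [v [Hv Hvy]].
  exists (fun n => hadd (hscal t (u n)) (hscal (1 - t) (v n))). split.
  - intro n. apply HA; auto.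
  - intros eps He.
    set (e' := eps / (Rabs t + Rabs (1 - t) + 1)).
    assert (He' : e' > 0).
    { unfold e'. pose proof (Rabs_pos t). pose proof (Rabs_pos (1-t)).
      apply Rdiv_lt_0_compat; lra. }
    destruct (Hux e' He') as [N1 H1]. destruct (Hvy e' He') as [N2 H2].
    exists (N1 + N2)%nat. intros n Hn.
    replace (hsub (hadd (hscal t (u n)) (hscal (1 - t) (v n))) (hadd (hscal t x) (hscal (1 - t) y)))
      with (hadd (hscal t (hsub (u n) x)) (hscal (1 - t) (hsub (v n) y))) by vring.
    eapply Rle_lt_trans. apply norm_triangle. rewrite !norm_scal.
    pose proof (H1 n ltac:(lia)). pose proof (H2 n ltac:(lia)).
    pose proof (Rabs_pos t). pose proof (Rabs_pos (1-t)).
    pose proof (hnorm_nonneg (hsub (u n) x)). pose proof (hnorm_nonneg (hsub (v n) y)).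
    assert (Rabs t * hnorm (hsub (u n) x) <= Rabs t * e') by (apply Rmult_le_compat_l; lra).
    assert (Rabs (1 - t) * hnorm (hsub (v n) y) <= Rabs (1 - t) * e') by (apply Rmult_le_compat_l; lra).
    assert (e' * (Rabs t + Rabs (1 - t) + 1) = eps) by (unfold e'; field; lra).
    nra.
Qed.

Lemma nearest_closure_orth (A : X -> Prop) x : (exists a, A a) -> is_affine A ->
  exists p, closure A p /\ forall c, A c -> hinner (hsub x p) (hsub c p) = 0.
Proof.
  intros Hne HA. destruct (nearest_closure_exists A x Hne HA) as [p [Hp Hpn]].
  exists p. split; auto. intros c Hc.
  apply (nearest_orth (closure A)); auto.
  - apply closure_affine; auto.
  - intros c' Hc'. apply norm_le_iff. auto.
  - apply closure_incl; auto.
Qed.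

End Conv.

Section ConvDR.
Context {X : HilbertSpace} (M N : LinProj X).
Implicit Types a b s y w f g r : X.
Notation T := (Tl M N).

Definition ranIT : X -> Prop := fun r => exists d, r = hsub d (T d).

Lemma ranIT_affine : is_affine ranIT.
Proof.
  intros x y t [d1 ->] [d2 ->]. exists (hadd (hscal t d1) (hscal (1 - t) d2)).
  rewrite Tl_comb. vring.
Qed.

Lemma ranIT_zero : ranIT hzero.
Proof. exists hzero. rewrite Tl_zero. vring. Qed.

Lemma closure_ranIT_perp g : closure ranIT g -> forall f, T f = f -> hinner g f = 0.
Proof.
  intros [u [Hu Hc]] f Hf. apply (converges_inner u); auto.
  intro n. destruct (Hu n) as [d ->]. rewrite inner_sub_l, Tl_fix_inner; auto. ring.
Qed.

Lemma fix_decomp y : exists f g, y = hadd f g /\ T f = f /\ closure ranIT g.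
Proof.
  destruct (nearest_closure_orth ranIT y (ex_intro _ _ ranIT_zero) ranIT_affine) as [p [Hp Ho]].
  exists (hsub y p), p. split; [vring|]. split; auto.
  apply perp_ran_fix. intros d.
  assert (H1 := Ho _ ranIT_zero). assert (H2 : ranIT (hsub d (T d))) by (exists d; auto).
  apply Ho in H2. rewrite inner_sub_r in H1, H2. rewrite inner_zero_r in H1. lra.
Qed.

Lemma strong_conv g : closure ranIT g ->
  forall eps, eps > 0 -> exists K, forall n, (n >= K)%nat -> hnorm (Tn M N n g) < eps.
Proof.
  intros [u [Hu Hc]] eps He.
  destruct (Hc (eps/2) ltac:(lra)) as [k Hk]. pose proof (Hk k (le_n k)) as Hgk.
  destruct (Hu k) as [d Hd].
  destruct (inv_small ((eps/2)*(eps/2) / (nsq d + 1))) as [K HK].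
  { pose proof (nsq_nonneg d). apply Rdiv_lt_0_compat; nra. }
  exists K. intros n Hn.
  replace g with (hadd (hsub g (u k)) (u k)) by vring.
  rewrite Tn_add. eapply Rle_lt_trans. apply norm_triangle.
  assert (H1 : hnorm (Tn M N n (hsub g (u k))) <= hnorm (hsub (u k) g)).
  { rewrite norm_sub_sym. apply norm_le_iff, Tn_nonexp. }
  assert (H2 : hnorm (Tn M N n (u k)) < eps / 2).
  { rewrite Hd, Tn_sub, <- Tn_S'. apply norm_lt_of_sq; [lra|].
    pose proof (asym_reg M N d n). pose proof (HK n Hn).
    pose proof (nsq_nonneg d). pose proof (nsq_nonneg (hsub (Tn M N n d) (Tn M N (S n) d))).
    assert (HS : 0 < INR (S n)) by (apply lt_0_INR; lia).
    set (q := nsq (hsub (Tn M N n d) (Tn M N (S n) d))) in *.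
    assert (q <= nsq d / INR (S n)).
    { apply (Rmult_le_reg_l (INR (S n))); auto.
      replace (INR (S n) * (nsq d / INR (S n))) with (nsq d) by (field; lra). lra. }
    assert (nsq d / INR (S n) <= (nsq d + 1) * / INR (S n)).
    { unfold Rdiv. apply Rmult_le_compat_r. left; apply Rinv_0_lt_compat; auto. lra. }
    assert ((nsq d + 1) * / INR (S n) < (nsq d + 1) * ((eps/2)*(eps/2) / (nsq d + 1))).
    { apply Rmult_lt_compat_l; auto. lra. }
    assert ((nsq d + 1) * ((eps/2)*(eps/2) / (nsq d + 1)) = (eps/2)*(eps/2)) by (field; lra).
    lra. }
  lra.
Qed.

End ConvDR.


Section Rate.
Context {X : HilbertSpace} (M N W : LinProj X).
Implicit Types a b s y w f g r e : X.
Notation PM := (lP M).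
Notation PN := (lP N).
Notation PW := (lP W).
Notation T := (Tl M N).

Definition SumMN : X -> Prop := fun q => exists m n, lS M m /\ lS N n /\ q = hadd m n.

Hypothesis HW : forall e, lS W e <-> lS M e /\ lS N e.

Definition perpW (u : X) : Prop := forall e, lS M e -> lS N e -> hinner u e = 0.

Variable c : R.
Hypothesis Hc0 : 0 <= c.
Hypothesis Hc1 : c < 1.
Hypothesis Hcf : forall u w, lS M u -> lS N w -> perpW u -> perpW w ->
  (hinner u w)^2 <= c^2 * nsq u * nsq w.
Hypothesis Hclosed : is_closed SumMN.

Lemma fixW e : lS M e -> lS N e -> T e = e.
Proof.
  intros HM HN. apply Tl_fix_intro.
  - rewrite (P_idem M e HM). apply P_idem; auto.
  - rewrite (P_idem M e HM), hsub_self. apply P_zero.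
Qed.

Lemma fixPerp b : (forall m, lS M m -> hinner b m = 0) -> (forall n, lS N n -> hinner b n = 0) ->
  T b = b.
Proof.
  intros HM HN. apply Tl_fix_intro.
  - rewrite (P_perp M b HM). rewrite P_zero. auto.
  - rewrite (P_perp M b HM). replace (hsub b hzero) with b by vring. apply P_perp; auto.
Qed.

Lemma SumMN_affine : is_affine SumMN.
Proof.
  intros x y t [m1 [n1 [H1 [H2 ->]]]] [m2 [n2 [H3 [H4 ->]]]].
  exists (hadd (hscal t m1) (hscal (1-t) m2)), (hadd (hscal t n1) (hscal (1-t) n2)).
  split; [apply lSadd; apply lSscal; auto|]. split; [apply lSadd; apply lSscal; auto|]. vring.
Qed.

Lemma SumMN_zero : SumMN hzero.
Proof. exists hzero, hzero. split; [apply lS0|]. split; [apply lS0|]. vring. Qed.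

Lemma in_sum q : (forall b, (forall m, lS M m -> hinner b m = 0) ->
                      (forall n, lS N n -> hinner b n = 0) -> hinner q b = 0) ->
  SumMN q.
Proof.
  intros Hq.
  destruct (nearest_closure_orth SumMN q (ex_intro _ _ SumMN_zero) SumMN_affine) as [p [Hp Ho]].
  assert (Hp' : SumMN p) by (apply closed_closure; auto).
  set (r := hsub q p).
  assert (H0 := Ho _ SumMN_zero). rewrite inner_sub_r, inner_zero_r in H0.
  assert (Hrs : forall s, SumMN s -> hinner r s = 0).
  { intros s Hs. pose proof (Ho s Hs). rewrite inner_sub_r in H. fold r in H, H0. lra. }
  assert (HrM : forall m, lS M m -> hinner r m = 0).
  { intros m Hm. apply Hrs. exists m, hzero. split; auto. split; [apply lS0|]. vring. }
  assert (HrN : forall n, lS N n -> hinner r n = 0).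
  { intros n Hn. apply Hrs. exists hzero, n. split; [apply lS0|]. split; auto. vring. }
  pose proof (Hq r HrM HrN) as Hqr.
  assert (Hpr : hinner p r = 0) by (rewrite hinner_sym; apply Hrs; auto).
  assert (Er : q = p).
  { apply veq_intro. change (hinner (hsub q p) r = 0). rewrite inner_sub_l. lra. }
  rewrite Er; auto.
Qed.

Lemma contract_P g : (forall f, T f = f -> hinner g f = 0) ->
  nsq (PN (PM g)) <= c^2 * nsq (PM g).
Proof.
  intros Hg. set (p := PM g).
  assert (Hp : perpW p).
  { intros e HM HN. unfold p. rewrite P_sa, (P_idem M e HM). apply Hg, fixW; auto. }
  assert (HNp : perpW (PN p)).
  { intros e HM HN. rewrite P_sa, (P_idem N e HN). apply Hp; auto. }
  pose proof (Hcf p (PN p) (lPin M g) (lPin N p) Hp HNp) as H.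
  assert (E : hinner p (PN p) = nsq (PN p)).
  { pose proof (lPorth N p (PN p) (lPin N p)). rewrite inner_sub_l in H0. unfold nsq. lra. }
  rewrite E in H.
  pose proof (nsq_nonneg (PN p)). pose proof (nsq_nonneg p).
  destruct (Req_dec (nsq (PN p)) 0) as [Hz|Hnz].
  - rewrite Hz. nra.
  - assert (0 < nsq (PN p)) by lra.
    apply (Rmult_le_reg_l (nsq (PN p))); auto. nra.
Qed.

Lemma contract_Q g : (forall f, T f = f -> hinner g f = 0) ->
  nsq (hsub (hsub g (PM g)) (PN (hsub g (PM g)))) <= c^2 * nsq (hsub g (PM g)).
Proof.
  intros Hg. set (q := hsub g (PM g)).
  assert (Hsum : SumMN q).
  { apply in_sum. intros b HbM HbN. unfold q. rewrite inner_sub_l, P_sa, (P_perp M b HbM).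
    rewrite inner_zero_r. rewrite (Hg b (fixPerp b HbM HbN)). ring. }
  destruct Hsum as [m [n [Hm [Hn Eq]]]].
  set (m' := hadd m (PW n)). set (n' := hsub n (PW n)).
  assert (HPWn : lS M (PW n) /\ lS N (PW n)) by (apply HW, lPin).
  assert (Hm' : lS M m') by (apply lSadd; tauto).
  assert (Hn' : lS N n') by (apply lSsub; tauto).
  assert (Eq' : q = hadd m' n') by (rewrite Eq; unfold m', n'; vring).
  assert (Hqperp : forall e, lS M e -> hinner q e = 0) by (intros e He; apply lPorth; auto).
  assert (Hn'W : perpW n').
  { intros e HM HN. apply lPorth. apply HW; auto. }
  assert (Hm'W : perpW m').
  { intros e HM HN. replace m' with (hsub q n') by (rewrite Eq'; vring).
    rewrite inner_sub_l, Hqperp, Hn'W; auto. ring. }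
  pose proof (Hcf m' n' Hm' Hn' Hm'W Hn'W) as Hcs.
  set (A := nsq m') in *. set (B := nsq n') in *. set (Xc := hinner m' n') in *.
  assert (HA : A + Xc = 0).
  { pose proof (Hqperp m' Hm'). rewrite Eq', hinner_add_l, (hinner_sym n') in H. auto. }
  assert (HQ : nsq q = B - A).
  { rewrite Eq', nsq_add. fold A B Xc. lra. }
  remember (nsq (PN q)) as Pq eqn:HPq.
  assert (HY : hinner (PN q) n' = Xc + B).
  { rewrite (inner_P_S N q n' Hn'), Eq', hinner_add_l. auto. }
  pose proof (CS (PN q) n') as HCS. rewrite HY in HCS. rewrite <- HPq in HCS. fold B in HCS.
  rewrite (P_pyth N q). rewrite <- HPq.
  replace (nsq (hsub q (PN q)) + Pq - Pq) with (nsq (hsub q (PN q))) by ring.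
  assert (Hgoal : (1 - c^2) * nsq q <= Pq).
  { pose proof (nsq_nonneg m') as Ha0. pose proof (nsq_nonneg n') as Hb0.
    pose proof (nsq_nonneg (PN q)) as Hp0.
    fold A in Ha0. fold B in Hb0. rewrite <- HPq in Hp0.
    assert (HAB : A <= c^2 * B).
    { destruct (Req_dec A 0) as [HA0|HA0]. rewrite HA0. nra.
      assert (0 < A) by lra. apply (Rmult_le_reg_l A); auto.
      replace Xc with (-A) in Hcs by lra. nra. }
    assert (Hc2 : c^2 < 1) by nra.
    destruct (Req_dec B 0) as [HB0|HB0].
    - rewrite HQ. nra.
    - assert (0 < B) by lra. rewrite HQ.
      replace (Xc + B) with (B - A) in HCS by lra.
      destruct (Req_dec (B - A) 0) as [HQ0|HQ0]. rewrite HQ0. nra.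
      assert (0 < B - A) by nra.
      assert (Hk : (1 - c^2) * B <= B - A) by nra.
      assert ((B - A) * ((1 - c^2) * (B - A)) <= (B - A) * Pq).
      { assert ((1 - c^2) * ((B - A) * (B - A)) <= (1 - c^2) * (Pq * B)).
        { apply Rmult_le_compat_l; nra. }
        assert ((1 - c^2) * (Pq * B) <= Pq * (B - A)).
        { rewrite <- Rmult_assoc, (Rmult_comm (1 - c^2) Pq), Rmult_assoc.
          apply Rmult_le_compat_l; auto. }
        nra. }
      apply (Rmult_le_reg_l (B - A)); auto. }
  rewrite (P_pyth N q) in *. rewrite <- HPq in *. lra.
Qed.

Lemma contract g : (forall f, T f = f -> hinner g f = 0) -> nsq (T g) <= c^2 * nsq g.
Proof.
  intros Hg. rewrite Tl_nsq, (P_pyth M g).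
  pose proof (contract_P g Hg). pose proof (contract_Q g Hg). lra.
Qed.

Lemma contract_n g n : (forall f, T f = f -> hinner g f = 0) ->
  nsq (Tn M N n g) <= (c^n)^2 * nsq g.
Proof.
  intros Hg. induction n.
  - simpl. lra.
  - rewrite Tn_S. eapply Rle_trans. apply contract. apply Tn_perp; auto.
    simpl pow. simpl pow in IHn. nra.
Qed.

Lemma contract_norm g n : (forall f, T f = f -> hinner g f = 0) ->
  hnorm (Tn M N n g) <= c^n * hnorm g.
Proof.
  intros Hg. apply norm_le_of_sq.
  - apply Rmult_le_pos. apply pow_le; auto. apply hnorm_nonneg.
  - replace (c ^ n * hnorm g * (c ^ n * hnorm g)) with ((c^n)^2 * (hnorm g * hnorm g)) by ring.
    rewrite hnorm_sq. apply contract_n; auto.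
Qed.

End Rate.


Lemma half_pow_small eps : eps > 0 -> exists K : nat, forall n, (n >= K)%nat -> (/2)^n < eps.
Proof.
  intros He. destruct (pow_lt_1_zero (/2)) with (y := eps) as [K HK]; auto.
  rewrite Rabs_right; lra.
  exists K. intros n Hn. pose proof (HK n Hn). rewrite Rabs_right in H; auto.
  apply Rle_ge, pow_le; lra.
Qed.

Section Cauchy.
Context {X : HilbertSpace}.

Lemma cauchy_bound (u : nat -> X) (b : nat -> R) :
  (forall k j, (j >= k)%nat -> hnorm (hsub (u j) (u k)) <= b k) ->
  (forall eps, eps > 0 -> exists K, b K < eps) ->
  exists l, converges u l /\ forall k, hnorm (hsub l (u k)) <= b k.
Proof.
  intros Hb Hsm.
  destruct (hcomplete u) as [l Hl].
  { intros eps He. destruct (Hsm (eps/2) ltac:(lra)) as [K HK].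
    exists K. intros m n Hm Hn. fold (hnorm (hsub (u m) (u n))).
    pose proof (Hb K m Hm). pose proof (Hb K n Hn).
    pose proof (norm_sub_triangle (u m) (u K) (u n)).
    rewrite (norm_sub_sym (u K) (u n)) in H1. change (hnorm (hsub (u m) (u n)) < eps). lra. }
  exists l. split; [exact Hl|].
  intro k. apply Rnot_lt_le. intro Hlt.
  set (eps := hnorm (hsub l (u k)) - b k).
  destruct (Hl eps ltac:(unfold eps; lra)) as [K HK].
  pose proof (HK (K + k)%nat ltac:(lia)) as H1.
  change (hnorm (hsub (u (K + k)%nat) l) < eps) in H1.
  pose proof (Hb k (K + k)%nat ltac:(lia)) as H2.
  pose proof (norm_sub_triangle l (u (K + k)%nat) (u k)) as H3.
  rewrite norm_sub_sym in H1. unfold eps in *. lra.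
Qed.

End Cauchy.

Section OM.
Context {X : HilbertSpace} (M N : LinProj X).
Hypothesis HMc : is_closed (lS M).
Hypothesis HNc : is_closed (lS N).
Hypothesis Hsc : is_closed (SumMN M N).
Notation Y := (SumMN M N).

Definition Ek (k : nat) (y : X) : Prop := exists m n, lS M m /\ lS N n /\ y = hadd m n /\
  hnorm m <= INR k /\ hnorm n <= INR k.

Definition approxE (k : nat) (y : X) : Prop :=
  forall eps, eps > 0 -> exists e, Ek k e /\ hnorm (hsub y e) < eps.

Definition stepP (k : nat) (y0 : X) (r : R) (p : X * R) : Prop :=
  Y (fst p) /\ 0 < snd p /\ snd p <= r / 2 /\ hnorm (hsub (fst p) y0) < r / 2 /\
  forall e, Ek k e -> 2 * snd p <= hnorm (hsub (fst p) e).

Lemma Y_all_E y : Y y -> exists j, Ek j y.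
Proof.
  intros [m [n [Hm [Hn ->]]]].
  destruct (INR_archimed 1 (Rmax (hnorm m) (hnorm n))) as [j Hj]; [lra|].
  exists j, m, n. repeat split; auto.
  - pose proof (Rmax_l (hnorm m) (hnorm n)). lra.
  - pose proof (Rmax_r (hnorm m) (hnorm n)). lra.
Qed.

Lemma baire : exists k y0 r, r > 0 /\ Y y0 /\
  forall y, Y y -> hnorm (hsub y y0) < r -> approxE k y.
Proof.
  apply NNPP. intro Hn.
  assert (Hstep : forall k y0 r, r > 0 -> Y y0 -> exists p, stepP k y0 r p).
  { intros k y0 r Hr Hy0.
    apply NNPP. intro Hno. apply Hn. exists k, y0, (r/2). split; [lra|]. split; auto.
    intros y Hy Hyr. intros eps He. apply NNPP. intro Hna.
    apply Hno. exists (y, Rmin (eps/2) (r/2)). unfold stepP; simpl.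
    split; auto. split. apply Rmin_glb_lt; lra. split. apply Rmin_r. split; auto.
    intros e He'. apply Rnot_lt_le. intro Hlt. apply Hna. exists e. split; auto.
    pose proof (Rmin_l (eps/2) (r/2)). lra. }
  set (step := fun k (q : X * R) => epsilon (inhabits (@hzero X, 0)) (stepP k (fst q) (snd q))).
  set (sq := fix sq (k : nat) : X * R := match k with O => (hzero, 1) | S k' => step k' (sq k') end).
  assert (Hinv : forall k, Y (fst (sq k)) /\ 0 < snd (sq k)).
  { induction k.
    - simpl. split; [apply SumMN_zero|lra].
    - destruct IHk as [H1 H2].
      assert (HP : stepP k (fst (sq k)) (snd (sq k)) (sq (S k))).
      { simpl. unfold step. apply epsilon_spec. apply Hstep; auto. }
      destruct HP as [A [B _]]. auto. }
  assert (HP : forall k, stepP k (fst (sq k)) (snd (sq k)) (sq (S k))).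
  { intro k. simpl. unfold step. apply epsilon_spec. apply Hstep; apply Hinv. }
  set (y := fun k => fst (sq k)). set (r := fun k => snd (sq k)).
  assert (Hr : forall k, 0 < r k) by (intro k; apply Hinv).
  assert (Hr2 : forall k, r (S k) <= r k / 2) by (intro k; apply (HP k)).
  assert (Hy2 : forall k, hnorm (hsub (y (S k)) (y k)) < r k / 2) by (intro k; apply (HP k)).
  assert (Hrpow : forall k, r k <= (/2)^k).
  { induction k. simpl. unfold r. simpl. lra. simpl. pose proof (Hr2 k). lra. }
  assert (HD : forall k i, hnorm (hsub (y (i + k)%nat) (y k)) <= r k - r (i + k)%nat).
  { intros k. induction i.
    - simpl. rewrite hnorm_hsub_self. lra.
    - simpl. pose proof (Hy2 (i + k)%nat). pose proof (Hr2 (i + k)%nat).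
      pose proof (norm_sub_triangle (y (S (i + k))) (y (i + k)%nat) (y k)). lra. }
  destruct (cauchy_bound y r) as [l [Hl Hlb]].
  { intros k j Hj. replace j with ((j - k) + k)%nat by lia. pose proof (HD k (j - k)%nat).
    pose proof (Hr ((j - k) + k)%nat). lra. }
  { intros eps He. destruct (half_pow_small eps He) as [K HK]. exists K.
    pose proof (Hrpow K). pose proof (HK K (le_n K)). lra. }
  assert (HYl : Y l).
  { apply (Hsc y l); auto. intro k; apply Hinv. }
  destruct (Y_all_E l HYl) as [j Hj].
  destruct (HP j) as [_ [_ [_ [_ Hfar]]]].
  pose proof (Hfar l Hj). fold (y (S j)) (r (S j)) in H.
  pose proof (Hlb (S j)). rewrite norm_sub_sym in H0. pose proof (Hr (S j)). lra.
Qed.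

End OM.


Section OM2.
Context {X : HilbertSpace} (M N : LinProj X).
Hypothesis HMc : is_closed (lS M).
Hypothesis HNc : is_closed (lS N).
Hypothesis Hsc : is_closed (SumMN M N).
Notation Y := (SumMN M N).

Lemma Y_add a b : Y a -> Y b -> Y (hadd a b).
Proof.
  intros [m1 [n1 [H1 [H2 ->]]]] [m2 [n2 [H3 [H4 ->]]]].
  exists (hadd m1 m2), (hadd n1 n2). split; [apply lSadd; auto|]. split; [apply lSadd; auto|]. vring.
Qed.

Lemma Y_scal t a : Y a -> Y (hscal t a).
Proof.
  intros [m1 [n1 [H1 [H2 ->]]]].
  exists (hscal t m1), (hscal t n1). split; [apply lSscal; auto|]. split; [apply lSscal; auto|]. vring.
Qed.

Lemma Y_sub a b : Y a -> Y b -> Y (hsub a b).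
Proof.
  intros Ha Hb. replace (hsub a b) with (hadd a (hscal (-1) b)) by vring.
  apply Y_add; auto. apply Y_scal; auto.
Qed.

Lemma Y_of a b : lS M a -> lS N b -> Y (hadd a b).
Proof. intros. exists a, b. auto. Qed.

Lemma hnorm_zero_eq (y : X) : hnorm y = 0 -> y = hzero.
Proof.
  intro H. apply nsq_eq0. rewrite <- hnorm_sq, H. ring.
Qed.

Lemma approx_local : exists C0, C0 > 0 /\ forall y, Y y -> forall eps, eps > 0 ->
  exists m n, lS M m /\ lS N n /\ hnorm m <= C0 * hnorm y /\ hnorm (hsub y (hadd m n)) < eps.
Proof.
  destruct (baire M N Hsc) as [k [y0 [r [Hr [Hy0 Happ]]]]].
  assert (HA : forall y, Y y -> hnorm y < r -> forall eps, eps > 0 ->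
     exists m n, lS M m /\ lS N n /\ hnorm m <= 2 * INR k /\ hnorm (hsub y (hadd m n)) < eps).
  { intros y Hy Hyr eps He.
    destruct (Happ (hadd y0 y) (Y_add _ _ Hy0 Hy)) with (eps := eps/2) as [e1 [[m1 [n1 [Hm1 [Hn1 [E1 [Bm1 Bn1]]]]]] He1]].
    { replace (hsub (hadd y0 y) y0) with y by vring. auto. }
    { lra. }
    destruct (Happ y0 Hy0) with (eps := eps/2) as [e2 [[m2 [n2 [Hm2 [Hn2 [E2 [Bm2 Bn2]]]]]] He2]].
    { rewrite hnorm_hsub_self. lra. }
    { lra. }
    exists (hsub m1 m2), (hsub n1 n2). split; [apply lSsub; auto|]. split; [apply lSsub; auto|].
    split.
    - eapply Rle_trans. replace (hsub m1 m2) with (hadd m1 (hopp m2)) by reflexivity.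
      apply norm_triangle. rewrite norm_opp. lra.
    - replace (hsub y (hadd (hsub m1 m2) (hsub n1 n2))) with
        (hsub (hsub (hadd y0 y) e1) (hsub y0 e2)) by (subst; vring).
      eapply Rle_lt_trans. replace (hsub (hsub (hadd y0 y) e1) (hsub y0 e2)) with
        (hadd (hsub (hadd y0 y) e1) (hopp (hsub y0 e2))) by reflexivity.
      apply norm_triangle. rewrite norm_opp. lra. }
  exists (4 * INR k / r + 1). split.
  { pose proof (pos_INR k). assert (0 <= 4 * INR k / r) by (apply Rmult_le_pos; [lra|left; apply Rinv_0_lt_compat; lra]). lra. }
  intros y Hy eps He.
  pose proof (pos_INR k) as Hk.
  assert (HC : 0 <= 4 * INR k / r) by (apply Rmult_le_pos; [lra|left; apply Rinv_0_lt_compat; lra]).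
  destruct (Req_dec (hnorm y) 0) as [Hz|Hnz].
  - apply hnorm_zero_eq in Hz. subst y. exists hzero, hzero.
    split; [apply lS0|]. split; [apply lS0|]. split.
    + replace (hnorm (@hzero X)) with 0. nra. unfold hnorm. fold (nsq (@hzero X)).
      rewrite nsq_zero. symmetry; apply sqrt_0.
    + replace (hsub hzero (hadd hzero hzero)) with (@hzero X) by vring.
      unfold hnorm. fold (nsq (@hzero X)). rewrite nsq_zero, sqrt_0. auto.
  - set (h := hnorm y). assert (Hh : 0 < h) by (pose proof (hnorm_nonneg y); unfold h; lra).
    set (s := r / (2 * h)). assert (Hs : 0 < s) by (unfold s; apply Rdiv_lt_0_compat; lra).
    assert (Hys : hnorm (hscal s y) < r).
    { rewrite norm_scal, Rabs_right by lra. fold h. unfold s. field_simplify; lra. }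
    destruct (HA (hscal s y) (Y_scal _ _ Hy) Hys (eps * s)) as [m' [n' [Hm' [Hn' [Bm' Br']]]]].
    { nra. }
    exists (hscal (/s) m'), (hscal (/s) n'). split; [apply lSscal; auto|]. split; [apply lSscal; auto|].
    split.
    + rewrite norm_scal, Rabs_right by (left; apply Rinv_0_lt_compat; auto).
      fold h. apply (Rmult_le_reg_l s); auto.
      rewrite <- Rmult_assoc, Rinv_r by lra. rewrite Rmult_1_l.
      eapply Rle_trans; [apply Bm'|].
      unfold s. replace (r / (2 * h) * ((4 * INR k / r + 1) * h)) with (2 * INR k + r / 2)
        by (field; lra). lra.
    + replace (hsub y (hadd (hscal (/ s) m') (hscal (/ s) n'))) with
        (hscal (/s) (hsub (hscal s y) (hadd m' n'))) by (apply veq_intro; iexp; field; lra).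
      rewrite norm_scal, Rabs_right by (left; apply Rinv_0_lt_compat; auto).
      apply (Rmult_lt_reg_l s); auto. rewrite <- Rmult_assoc, Rinv_r by lra. lra.
Qed.

End OM2.


Section OM3.
Context {X : HilbertSpace} (M N : LinProj X).
Hypothesis HMc : is_closed (lS M).
Hypothesis HNc : is_closed (lS N).
Hypothesis Hsc : is_closed (SumMN M N).
Notation Y := (SumMN M N).

Lemma hnorm_zero : hnorm (@hzero X) = 0.
Proof. unfold hnorm. fold (nsq (@hzero X)). rewrite nsq_zero. apply sqrt_0. Qed.

Lemma bounded_decomp : exists K, K > 0 /\ forall y, Y y ->
  exists m n, lS M m /\ lS N n /\ y = hadd m n /\ hnorm m <= K * hnorm y.
Proof.
  destruct (approx_local M N Hsc) as [C0 [HC0 Happ]].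
  exists (2 * C0). split; [lra|]. intros y Hy.
  destruct (Req_dec (hnorm y) 0) as [Hz|Hnz].
  { apply hnorm_zero_eq in Hz. subst y. exists hzero, hzero.
    split; [apply lS0|]. split; [apply lS0|]. split; [vring|]. rewrite hnorm_zero. lra. }
  set (h := hnorm y). assert (Hh : 0 < h) by (pose proof (hnorm_nonneg y); unfold h; lra).
  set (good := fun (z : X) (eps : R) (p : X * X) => lS M (fst p) /\ lS N (snd p) /\
     hnorm (fst p) <= C0 * hnorm z /\ hnorm (hsub z (hadd (fst p) (snd p))) < eps).
  set (pick := fun z eps => epsilon (inhabits (@hzero X, @hzero X)) (good z eps)).
  assert (Hpick : forall z eps, Y z -> eps > 0 -> good z eps (pick z eps)).
  { intros z eps Hz He. unfold pick. apply epsilon_spec.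
    destruct (Happ z Hz eps He) as [m [n Hmn]]. exists (m, n). exact Hmn. }
  set (eps_ := fun j : nat => h * (/2)^(S j)).
  assert (Heps : forall j, eps_ j > 0).
  { intro j. unfold eps_. apply Rmult_lt_0_compat; auto. apply pow_lt; lra. }
  set (ys := fix ys (j : nat) : X := match j with O => y
     | S j' => hsub (ys j') (hadd (fst (pick (ys j') (eps_ j'))) (snd (pick (ys j') (eps_ j')))) end).
  set (ms := fun j => fst (pick (ys j) (eps_ j))).
  set (ns := fun j => snd (pick (ys j) (eps_ j))).
  assert (Hys : forall j, Y (ys j) /\ hnorm (ys j) <= h * (/2)^j).
  { induction j.
    - simpl. split; auto. unfold h. lra.
    - destruct IHj as [H1 H2].
      destruct (Hpick (ys j) (eps_ j) H1 (Heps j)) as [A [B [Cc D]]].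
      simpl. split.
      + apply Y_sub; auto. apply Y_of; auto.
      + unfold eps_ in D. left. exact D. }
  assert (Hg : forall j, good (ys j) (eps_ j) (ms j, ns j)).
  { intro j. unfold ms, ns. rewrite <- surjective_pairing. apply Hpick; [apply Hys|apply Heps]. }
  assert (Hms : forall j, hnorm (ms j) <= C0 * h * (/2)^j).
  { intro j. destruct (Hg j) as [_ [_ [Hb _]]]. simpl in Hb. pose proof (Hys j) as [_ Hy2].
    rewrite Rmult_assoc. eapply Rle_trans; [apply Hb|]. apply Rmult_le_compat_l; lra. }
  set (Ms := fix Ms (j : nat) : X := match j with O => hzero | S j' => hadd (Ms j') (ms j') end).
  set (Ns := fix Ns (j : nat) : X := match j with O => hzero | S j' => hadd (Ns j') (ns j') end).
  assert (HMs : forall j, lS M (Ms j)).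
  { induction j; simpl. apply lS0. apply lSadd; auto. apply (Hg j). }
  assert (HNs : forall j, lS N (Ns j)).
  { induction j; simpl. apply lS0. apply lSadd; auto. apply (Hg j). }
  assert (Hid : forall j, y = hadd (hadd (Ms j) (Ns j)) (ys j)).
  { induction j; simpl. vring. rewrite IHj at 1. fold (ms j) (ns j). vring. }
  assert (HMsb : forall k i, hnorm (hsub (Ms (i + k)%nat) (Ms k)) <= 2 * C0 * h * ((/2)^k - (/2)^(i + k))).
  { intro k. induction i.
    - simpl. rewrite hnorm_hsub_self. lra.
    - simpl. replace (hsub (hadd (Ms (i + k)%nat) (ms (i + k)%nat)) (Ms k)) with
        (hadd (hsub (Ms (i + k)%nat) (Ms k)) (ms (i + k)%nat)) by vring.
      eapply Rle_trans. apply norm_triangle. pose proof (Hms (i + k)%nat). lra. }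
  destruct (cauchy_bound Ms (fun k => 2 * C0 * h * (/2)^k)) as [ms_ [Hconv Hbd]].
  { intros k j Hj. replace j with ((j - k) + k)%nat by lia.
    pose proof (HMsb k (j - k)%nat). pose proof (pow_le (/2) ((j - k) + k)%nat ltac:(lra)).
    assert (0 <= 2 * C0 * h) by nra. nra. }
  { intros eps He. destruct (half_pow_small (eps / (2 * C0 * h + 1))) as [K HK].
    { apply Rdiv_lt_0_compat; nra. }
    exists K. pose proof (HK K (le_n K)).
    assert (0 <= 2 * C0 * h) by nra.
    assert ((/2)^K * (2 * C0 * h + 1) < eps).
    { apply (Rmult_lt_compat_r (2 * C0 * h + 1)) in H; [|lra].
      replace (eps / (2 * C0 * h + 1) * (2 * C0 * h + 1)) with eps in H by (field; lra). lra. }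
    pose proof (pow_le (/2) K ltac:(lra)). nra. }
  assert (HmsM : lS M ms_) by (apply (HMc Ms); auto).
  set (ns_ := hsub y ms_).
  assert (HnsN : lS N ns_).
  { apply (HNc Ns); auto. intros eps He.
    destruct (Hconv (eps/2) ltac:(lra)) as [K1 HK1].
    destruct (half_pow_small (eps / (2 * (h + 1)))) as [K2 HK2].
    { apply Rdiv_lt_0_compat; lra. }
    exists (K1 + K2)%nat. intros n Hn.
    replace (hsub (Ns n) ns_) with (hopp (hadd (hsub (Ms n) ms_) (ys n)))
      by (unfold ns_; rewrite (Hid n) at 1; vring).
    rewrite norm_opp. eapply Rle_lt_trans. apply norm_triangle.
    pose proof (HK1 n ltac:(lia)). pose proof (HK2 n ltac:(lia)).
    destruct (Hys n) as [_ Hyn].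
    assert (h * (/2)^n < eps / 2).
    { assert (h * (/2)^n <= (h+1) * (/2)^n).
      { pose proof (pow_le (/2) n ltac:(lra)). nra. }
      assert ((h + 1) * (/2)^n < (h + 1) * (eps / (2 * (h + 1)))) by (apply Rmult_lt_compat_l; lra).
      assert ((h + 1) * (eps / (2 * (h + 1))) = eps / 2) by (field; lra).
      lra. }
    lra. }
  exists ms_, ns_. split; auto. split; auto. split; [unfold ns_; vring|].
  pose proof (Hbd 0%nat). simpl in H. replace (hsub ms_ hzero) with ms_ in H by vring.
  fold h. lra.
Qed.

End OM3.


Lemma cF_is_lub {X : HilbertSpace} (A B : X -> Prop) : A hzero -> B hzero ->
  is_lub (cF_set A B) (cF A B).
Proof.
  intros HA HB. unfold cF. apply epsilon_spec.
  destruct (completeness (cF_set A B)) as [m Hm].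
  - exists 1. intros r [u [w [_ [_ [Hu [_ [_ [Hw ->]]]]]]]].
    pose proof (abs_inner_le_norm u w). pose proof (hnorm_nonneg u). pose proof (hnorm_nonneg w).
    nra.
  - exists 0. exists hzero, hzero. repeat split; auto.
    + intros e _. apply inner_zero_l.
    + rewrite hnorm_zero. lra.
    + intros e _. apply inner_zero_l.
    + rewrite hnorm_zero. lra.
    + rewrite inner_zero_l, Rabs_R0. auto.
  - exists m; auto.
Qed.

Section CF.
Context {X : HilbertSpace} (M N : LinProj X).
Hypothesis HMc : is_closed (lS M).
Hypothesis HNc : is_closed (lS N).
Hypothesis Hsc : is_closed (SumMN M N).

Definition Sc : R -> Prop := fun r => exists u w,
  lS M u /\ perpW M N u /\ hnorm u <= 1 /\ lS N w /\ perpW M N w /\ hnorm w <= 1 /\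
  r = Rabs (hinner u w).

Lemma perpW_scal t u : perpW M N u -> perpW M N (hscal t u).
Proof. intros H e HM HN. rewrite hinner_scal_l, H; auto. ring. Qed.

Lemma Sc_bound c : is_lub Sc c -> 0 <= c /\ forall u w, lS M u -> lS N w -> perpW M N u -> perpW M N w ->
  (hinner u w)^2 <= c^2 * nsq u * nsq w.
Proof.
  intros [Hub Hl].
  assert (Hc0 : 0 <= c).
  { apply Hub. exists hzero, hzero. repeat split; try apply lS0.
    - intros e _ _. apply inner_zero_l.
    - rewrite hnorm_zero. lra.
    - intros e _ _. apply inner_zero_l.
    - rewrite hnorm_zero. lra.
    - rewrite inner_zero_l, Rabs_R0. auto. }
  split; auto. intros u w Hu Hw Pu Pw.
  destruct (Req_dec (hnorm u) 0) as [Hu0|Hu0].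
  { apply hnorm_zero_eq in Hu0. subst u. rewrite inner_zero_l. unfold nsq. rewrite inner_zero_l. nra. }
  destruct (Req_dec (hnorm w) 0) as [Hw0|Hw0].
  { apply hnorm_zero_eq in Hw0. subst w. rewrite inner_zero_r. unfold nsq. rewrite inner_zero_r. nra. }
  pose proof (hnorm_nonneg u). pose proof (hnorm_nonneg w).
  set (a := hnorm u) in *. set (b := hnorm w) in *.
  assert (Ha : 0 < a) by lra. assert (Hb : 0 < b) by lra.
  assert (Hin : Sc (Rabs (hinner (hscal (/a) u) (hscal (/b) w)))).
  { exists (hscal (/a) u), (hscal (/b) w). repeat split.
    - apply lSscal; auto.
    - apply perpW_scal; auto.
    - rewrite norm_scal, Rabs_right by (left; apply Rinv_0_lt_compat; auto). fold a.
      rewrite Rinv_l by lra. lra.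
    - apply lSscal; auto.
    - apply perpW_scal; auto.
    - rewrite norm_scal, Rabs_right by (left; apply Rinv_0_lt_compat; auto). fold b.
      rewrite Rinv_l by lra. lra. }
  apply Hub in Hin. rewrite hinner_scal_l, inner_scal_r in Hin.
  rewrite Rabs_mult, Rabs_mult, !Rabs_right in Hin by (left; apply Rinv_0_lt_compat; auto).
  assert (Habs : Rabs (hinner u w) <= c * a * b).
  { apply (Rmult_le_reg_l (/a * /b)). apply Rmult_lt_0_compat; apply Rinv_0_lt_compat; auto.
    replace (/ a * / b * (c * a * b)) with c by (field; lra). lra. }
  rewrite <- (hnorm_sq u), <- (hnorm_sq w). fold a b.
  pose proof (Rabs_pos (hinner u w)).
  replace ((hinner u w)^2) with (Rabs (hinner u w) * Rabs (hinner u w))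
    by (rewrite <- Rabs_mult, Rabs_right; [ring| apply Rle_ge; nra]).
  nra.
Qed.

Lemma cf_lt1 c : is_lub Sc c -> c < 1.
Proof.
  intros Hlub. destruct (Sc_bound c Hlub) as [Hc0 _].
  destruct Hlub as [Hub Hl].
  apply Rnot_le_lt. intro Hc1.
  destruct (bounded_decomp M N HMc HNc Hsc) as [K [HK Hdec]].
  set (eps := / (8 * K * K + 2)).
  assert (Heps : 0 < eps) by (unfold eps; apply Rinv_0_lt_compat; nra).
  assert (Heps2 : eps <= 1/2).
  { unfold eps. apply (Rmult_le_reg_l (8 * K * K + 2)). nra.
    rewrite Rinv_r by nra. nra. }
  assert (HKe : 2 * K * K * eps < 1/4).
  { unfold eps. apply (Rmult_lt_reg_l (8 * K * K + 2)). nra.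
    replace ((8 * K * K + 2) * (2 * K * K * / (8 * K * K + 2))) with (2 * K * K) by (field; nra).
    nra. }
  assert (Hex : exists r, Sc r /\ r > 1 - eps).
  { apply NNPP. intro Hno.
    assert (is_upper_bound Sc (1 - eps)).
    { intros r Hr. apply Rnot_lt_le. intro Hlt. apply Hno. exists r; split; auto. }
    apply Hl in H. lra. }
  destruct Hex as [r [[u [w [Hu [Pu [Nu [Hw [Pw [Nw ->]]]]]]]] Hr]].
  set (s := if Rle_dec 0 (hinner u w) then 1 else -1).
  assert (Hs : s * hinner u w = Rabs (hinner u w) /\ s * s = 1).
  { unfold s. destruct (Rle_dec 0 (hinner u w)).
    - rewrite Rabs_right by lra. split; ring.
    - rewrite Rabs_left by lra. split; ring. }
  set (y := hsub u (hscal s w)).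
  assert (Hy : SumMN M N y).
  { exists u, (hscal (-s) w). split; auto. split; [apply lSscal; auto|]. unfold y; vring. }
  pose proof (sq_le_of_norm u 1 Nu) as Nu2. pose proof (sq_le_of_norm w 1 Nw) as Nw2.
  assert (Hny : nsq y <= 2 * eps).
  { unfold y. rewrite nsq_sub, nsq_scal, inner_scal_r. destruct Hs as [Hs1 Hs2].
    rewrite Hs1, Hs2. lra. }
  destruct (Hdec y Hy) as [m [n [Hm [Hn [Eq Hmb]]]]].
  set (e := hsub u m).
  assert (HeM : lS M e) by (apply lSsub; auto).
  assert (HeN : lS N e).
  { replace e with (hadd n (hscal s w)) by (unfold e; apply veq_intro;
      assert (E : u = hadd (hadd m n) (hscal s w)) by (rewrite <- Eq; unfold y; vring);
      rewrite E; iexp; ring).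
    apply lSadd; auto. apply lSscal; auto. }
  assert (Hue : hinner u e = 0) by (apply Pu; auto).
  assert (Hum : nsq u = hinner u m).
  { unfold e in Hue. rewrite inner_sub_r in Hue. unfold nsq. lra. }
  pose proof (CS u m) as Hcs. rewrite <- Hum in Hcs.
  pose proof (nsq_nonneg u). pose proof (nsq_nonneg m). pose proof (nsq_nonneg y).
  assert (Hum2 : nsq u <= nsq m).
  { destruct (Req_dec (nsq u) 0) as [Z|Z]. rewrite Z; auto.
    apply (Rmult_le_reg_l (nsq u)); [lra|]. nra. }
  assert (Hmy : nsq m <= K * K * nsq y).
  { pose proof (sq_le_of_norm m (K * hnorm y) Hmb). rewrite <- (hnorm_sq y). nra. }
  pose proof (CS u w) as Huw.
  assert (Hr2 : (1 - eps) * (1 - eps) < (Rabs (hinner u w))^2).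
  { pose proof (Rabs_pos (hinner u w)). nra. }
  rewrite pow2_abs in Hr2.
  nra.
Qed.

End CF.


Section Aff.
Context {X : HilbertSpace}.
Implicit Types a b c d x y z w : X.

Definition Perp (C : X -> Prop) (w : X) : Prop := forall c d, C c -> C d -> hinner w (hsub c d) = 0.

Lemma Perp_scal (C : X -> Prop) t w : Perp C w -> Perp C (hscal t w).
Proof. intros H c d Hc Hd. rewrite hinner_scal_l, H; auto. ring. Qed.

Lemma proj_shift (C : X -> Prop) y w : closed_affine C -> Perp C w -> proj C (hadd y w) = proj C y.
Proof.
  intros HC Hw. destruct (closed_affine_proj C y HC) as [Hp Ho].
  apply proj_eq; auto. intros c Hc.
  replace (hsub (hadd y w) (proj C y)) with (hadd (hsub y (proj C y)) w) by vring.
  rewrite hinner_add_l, Ho, Hw; auto. ring.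
Qed.

Lemma proj_affine (C : X -> Prop) a b t : closed_affine C ->
  proj C (hadd (hscal t a) (hscal (1 - t) b)) = hadd (hscal t (proj C a)) (hscal (1 - t) (proj C b)).
Proof.
  intros HC. pose proof HC as [_ [HA _]].
  destruct (closed_affine_proj C a HC) as [Ha _]. destruct (closed_affine_proj C b HC) as [Hb _].
  apply proj_eq. apply HA; auto.
  intros c Hc.
  replace (hsub (hadd (hscal t a) (hscal (1 - t) b)) (hadd (hscal t (proj C a)) (hscal (1 - t) (proj C b))))
    with (hadd (hscal t (hsub a (proj C a))) (hscal (1 - t) (hsub b (proj C b)))) by vring.
  rewrite hinner_add_l, !hinner_scal_l.
  rewrite !closed_affine_proj_orth; auto; try ring; apply HA; auto.
Qed.

Lemma DR_affine (U V : X -> Prop) a b t : closed_affine U -> closed_affine V ->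
  DR U V (hadd (hscal t a) (hscal (1 - t) b)) = hadd (hscal t (DR U V a)) (hscal (1 - t) (DR U V b)).
Proof.
  intros HU HV. unfold DR. rewrite proj_affine; auto.
  replace (hsub (hscal 2 (hadd (hscal t (proj U a)) (hscal (1 - t) (proj U b)))) (hadd (hscal t a) (hscal (1 - t) b)))
    with (hadd (hscal t (hsub (hscal 2 (proj U a)) a)) (hscal (1 - t) (hsub (hscal 2 (proj U b)) b))) by vring.
  rewrite proj_affine; auto. vring.
Qed.

Lemma translate_closed_affine (v : X) (V : X -> Prop) : closed_affine V -> closed_affine (translate v V).
Proof.
  intros [[w0 Hw0] [HA Hcl]]. split; [|split].
  - exists (hadd v w0), w0; auto.
  - intros x y t [w1 [H1 ->]] [w2 [H2 ->]]. exists (hadd (hscal t w1) (hscal (1 - t) w2)).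
    split. apply HA; auto. vring.
  - intros u l Hu Hc. exists (hsub l v). split; [|vring].
    apply (Hcl (fun n => hsub (u n) v)).
    + intro n. destruct (Hu n) as [w [Hw ->]]. replace (hsub (hadd v w) v) with w by vring. auto.
    + intros eps He. destruct (Hc eps He) as [N HN]. exists N. intros n Hn.
      replace (hsub (hsub (u n) v) (hsub l v)) with (hsub (u n) l) by vring. auto.
Qed.

Lemma inter_closed_affine (A B : X -> Prop) z : closed_affine A -> closed_affine B -> A z -> B z ->
  closed_affine (inter A B).
Proof.
  intros [_ [HA1 HA2]] [_ [HB1 HB2]] Hz1 Hz2. split; [|split].
  - exists z. split; auto.
  - intros x y t [H1 H2] [H3 H4]. split; [apply HA1|apply HB1]; auto.
  - intros u l Hu Hc. split; [apply (HA2 u)|apply (HB2 u)]; auto; intro n; apply Hu.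
Qed.

Lemma proj_translate (v : X) (V : X -> Prop) (q : X) : closed_affine V ->
  proj (translate v V) q = hadd v (proj V (hsub q v)).
Proof.
  intros HV. destruct (closed_affine_proj V (hsub q v) HV) as [Hp Ho].
  apply proj_eq. exists (proj V (hsub q v)); auto.
  intros c [w [Hw ->]].
  replace (hsub q (hadd v (proj V (hsub q v)))) with (hsub (hsub q v) (proj V (hsub q v))) by vring.
  replace (hsub (hadd v w) (hadd v (proj V (hsub q v)))) with (hsub w (proj V (hsub q v))) by vring.
  auto.
Qed.

Lemma iter_ext (f g : X -> X) n x : (forall y, f y = g y) -> Nat.iter n f x = Nat.iter n g x.
Proof. intros H. induction n; simpl; auto. rewrite IHn; auto. Qed.

Lemma dir_closed (C : X -> Prop) z : closed_affine C -> is_closed (dirS C z).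
Proof.
  intros [_ [_ Hcl]] u l Hu Hc. unfold dirS in *. apply (Hcl (fun n => hadd z (u n))); auto.
  intros eps He. destruct (Hc eps He) as [N HN]. exists N. intros n Hn.
  replace (hsub (hadd z (u n)) (hadd z l)) with (hsub (u n) l) by vring. auto.
Qed.

Lemma par_iff (C : X -> Prop) z (e : X) : closed_affine C -> C z -> (par C e <-> dirS C z e).
Proof.
  intros [_ [HA _]] Hz. unfold dirS. split.
  - intros [a [b [Ha [Hb ->]]]]. apply affine_3; auto.
  - intros H. exists (hadd z e), z. split; auto. split; auto. vring.
Qed.

Lemma lub_iff (E E' : R -> Prop) (c : R) : (forall r, E r <-> E' r) -> is_lub E c -> is_lub E' c.
Proof.
  intros H [H1 H2]. split.
  - intros r Hr. apply H1, H, Hr.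
  - intros b Hb. apply H2. intros r Hr. apply Hb, H, Hr.
Qed.

Lemma closed_iff (A B : X -> Prop) : (forall y, A y <-> B y) -> is_closed A -> is_closed B.
Proof. intros H HA u l Hu Hc. apply H. apply (HA u l); auto. intro n; apply H; auto. Qed.

End Aff.


Section Main.
Context {X : HilbertSpace} (U V : X -> Prop) (hU : closed_affine U) (hV : closed_affine V).
Implicit Types a b c d x y z w : X.

Lemma proj_diff (C : X -> Prop) z (HC : closed_affine C) (Hz : C z) y1 y2 :
  proj C y1 = hadd (proj C y2) (lP (mkLP C z HC Hz) (hsub y1 y2)).
Proof.
  rewrite (proj_via_dir C z HC Hz y1), (proj_via_dir C z HC Hz y2).
  replace (hsub y1 z) with (hadd (hsub y2 z) (hsub y1 y2)) by vring.
  rewrite P_add. vring.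
Qed.

Lemma T_diff u0 v0 (Hu0 : U u0) (Hv0 : V v0) z1 z2 :
  DR U V z1 = hadd (DR U V z2) (Tl (mkLP U u0 hU Hu0) (mkLP V v0 hV Hv0) (hsub z1 z2)).
Proof.
  set (M := mkLP U u0 hU Hu0). set (N := mkLP V v0 hV Hv0).
  unfold DR. rewrite (proj_diff U u0 hU Hu0 z1 z2). fold M.
  rewrite (proj_diff V v0 hV Hv0 _ (hsub (hscal 2 (proj U z2)) z2)). fold N.
  unfold Tl.
  replace (hsub (hsub (hscal 2 (hadd (proj U z2) (lP M (hsub z1 z2)))) z1)
             (hsub (hscal 2 (proj U z2)) z2))
    with (hsub (hscal 2 (lP M (hsub z1 z2))) (hsub z1 z2)) by vring.
  vring.
Qed.

Lemma ran_affine : is_affine (ran_Id_minus (DR U V)).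
Proof.
  intros a b t [z1 ->] [z2 ->]. exists (hadd (hscal t z1) (hscal (1 - t) z2)).
  rewrite DR_affine; auto. vring.
Qed.

Lemma proj_inner_dir (C : X -> Prop) z (HC : closed_affine C) (Hz : C z) y e :
  dirS C z e -> hinner (proj C y) e = hinner y e.
Proof.
  intros He. pose proof (closed_affine_proj_orth C y (hadd z e) z HC He Hz) as H.
  replace (hsub (hadd z e) z) with e in H by vring. rewrite inner_sub_l in H. lra.
Qed.

Lemma v_perp (v : X) : ran_Id_minus (DR U V) v ->
  (forall a, ran_Id_minus (DR U V) a -> hinner v (hsub a v) = 0) ->
  Perp U v /\ Perp V v.
Proof.
  intros [z0 Hz0] Hmin.
  destruct hU as [[u0 Hu0] _]. destruct hV as [[v0 Hv0] _].
  set (M := mkLP U u0 hU Hu0). set (N := mkLP V v0 hV Hv0).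
  assert (Hfix : Tl M N v = v).
  { apply perp_ran_fix. intro d.
    assert (Hr : ran_Id_minus (DR U V) (hsub (hadd z0 d) (DR U V (hadd z0 d)))) by (eexists; eauto).
    pose proof (Hmin _ Hr) as H.
    rewrite (T_diff u0 v0 Hu0 Hv0 (hadd z0 d) z0) in H. fold M N in H.
    replace (hsub (hadd z0 d) z0) with d in H by vring.
    replace (hsub (hsub (hadd z0 d) (hadd (DR U V z0) (Tl M N d))) v) with (hsub d (Tl M N d)) in H
      by (rewrite Hz0; vring). auto. }
  destruct (Tl_fix M N v Hfix) as [Ha Hb].
  set (a := lP M v) in *.
  assert (HaM : lS M a) by apply lPin.
  assert (HaN : lS N a) by (rewrite <- Ha; apply lPin).
  assert (HvW : forall e, lS M e -> lS N e -> hinner v e = 0).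
  { intros e HM HN. rewrite Hz0. unfold DR.
    replace (hsub z0 (hadd (hsub z0 (proj U z0)) (proj V (hsub (hscal 2 (proj U z0)) z0))))
      with (hsub (proj U z0) (proj V (hsub (hscal 2 (proj U z0)) z0))) by vring.
    rewrite inner_sub_l. rewrite (proj_inner_dir U u0 hU Hu0) by exact HM.
    rewrite (proj_inner_dir V v0 hV Hv0) by exact HN.
    rewrite inner_sub_l, hinner_scal_l, (proj_inner_dir U u0 hU Hu0) by exact HM. ring. }
  assert (Ha0 : a = hzero).
  { apply nsq_eq0. unfold nsq.
    replace (hinner a a) with (hinner v a - hinner (hsub v a) a) by (rewrite inner_sub_l; ring).
    rewrite HvW by auto. unfold a. rewrite lPorth by auto. ring. }
  assert (HvM : forall s, lS M s -> hinner v s = 0).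
  { intros s Hs. pose proof (lPorth M v s Hs). fold a in H. rewrite Ha0 in H.
    replace (hsub v hzero) with v in H by vring. auto. }
  assert (HvN : forall s, lS N s -> hinner v s = 0).
  { intros s Hs. pose proof (lPorth N v s Hs).
    rewrite Ha0 in Hb. replace (hsub v hzero) with v in Hb by vring. rewrite Hb in H.
    replace (hsub v hzero) with v in H by vring. auto. }
  split.
  - intros c d Hc Hd. apply HvM. apply (proj1 (par_iff U u0 (hsub c d) hU Hu0)). exists c, d. auto.
  - intros c d Hc Hd. apply HvN. apply (proj1 (par_iff V v0 (hsub c d) hV Hv0)). exists c, d. auto.
Qed.

Lemma DR_shift w y : Perp U w -> Perp V w -> DR U V (hadd y w) = hadd (DR U V y) w.
Proof.
  intros HwU HwV. unfold DR. rewrite proj_shift; auto.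
  replace (hsub (hscal 2 (proj U y)) (hadd y w)) with
    (hadd (hsub (hscal 2 (proj U y)) y) (hscal (-1) w)) by vring.
  rewrite proj_shift; auto. vring. apply Perp_scal; auto.
Qed.

Lemma iter_shift w x n : Perp U w -> Perp V w ->
  Nat.iter n (fun y => DR U V (hadd y w)) x = hadd (Nat.iter n (DR U V) x) (hscal (INR n) w).
Proof.
  intros HU HV. induction n.
  - simpl. vring.
  - simpl Nat.iter. rewrite IHn.
    replace (hadd (hadd (Nat.iter n (DR U V) x) (hscal (INR n) w)) w)
      with (hadd (Nat.iter n (DR U V) x) (hscal (INR (S n)) w)) by (rewrite S_INR; vring).
    apply DR_shift; apply Perp_scal; auto.
Qed.

Lemma DR_translate v y : Perp V v -> DR U (translate v V) y = hadd (DR U V y) v.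
Proof.
  intros HvV. unfold DR. rewrite proj_translate; auto.
  replace (hsub (hsub (hscal 2 (proj U y)) y) v) with
    (hadd (hsub (hscal 2 (proj U y)) y) (hscal (-1) v)) by vring.
  rewrite proj_shift; auto. vring. apply Perp_scal; auto.
Qed.

Lemma resolvent_eq v y : Perp U v -> resolvent_shift v U y = proj U y.
Proof.
  intros HvU. destruct (closed_affine_proj U y hU) as [HP Ho].
  set (P := proj U y) in *.
  assert (HnP : normal_cone U P (hadd (hsub y P) v)).
  { split; auto. intros c Hc.
    rewrite hinner_add_l, Ho, HvU; auto. lra. }
  unfold resolvent_shift.
  destruct (epsilon_spec (inhabits hzero) (fun z => normal_cone U z (hadd (hsub y z) v))
              (ex_intro _ P HnP)) as [Hz1 Hz2].
  set (z := epsilon (inhabits hzero) (fun z => normal_cone U z (hadd (hsub y z) v))) in *.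
  pose proof (Hz2 P HP) as H1.
  assert (H2 : hinner (hadd (hsub y P) v) (hsub z P) = 0).
  { rewrite hinner_add_l, Ho, HvU; auto. ring. }
  replace (hadd (hsub y z) v) with (hadd (hadd (hsub y P) v) (hsub P z)) in H1 by vring.
  rewrite hinner_add_l in H1.
  replace (hsub P z) with (hopp (hsub z P)) in H1 at 1 by vring.
  rewrite inner_opp_r, H2 in H1.
  pose proof (nsq_nonneg (hsub P z)). fold (nsq (hsub P z)) in H1.
  symmetry. apply hsub_eq0, nsq_eq0. lra.
Qed.

End Main.


Lemma par_translate {X : HilbertSpace} (v : X) (V : X -> Prop) e :
  par (translate v V) e <-> par V e.
Proof.
  split.
  - intros [a [b [[w1 [H1 ->]] [[w2 [H2 ->]] ->]]]]. exists w1, w2. repeat split; auto. vring.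
  - intros [a [b [Ha [Hb ->]]]]. exists (hadd v a), (hadd v b).
    split; [exists a; auto|]. split; [exists b; auto|]. vring.
Qed.

Lemma normP_le {X : HilbertSpace} (L : LinProj X) q : hnorm (lP L q) <= hnorm q.
Proof. apply norm_le_iff, P_le. Qed.

Theorem main_thm (X : HilbertSpace) (U V : X -> Prop)
  (hU : closed_affine U) (hV : closed_affine V) (x : X) :
  let T := DR U V in
  let v := proj (closure (ran_Id_minus T)) hzero in
  ran_Id_minus T v ->
  (forall n : nat,
     proj U (Nat.iter n T x) = proj U (hadd (Nat.iter n T x) (hscal (INR n) v)) /\
     proj U (hadd (Nat.iter n T x) (hscal (INR n) v)) = proj U (Nat.iter n (Tshift T v) x) /\
     proj U (Nat.iter n (Tshift T v) x) = proj U (Nat.iter n (DR U (translate v V)) x) /\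
     proj U (Nat.iter n (DR U (translate v V)) x)
       = resolvent_shift v U (Nat.iter n (Tshift T v) x)) /\
  converges (fun n => proj U (Nat.iter n T x)) (proj (inter U (translate v V)) x) /\
  (is_closed (msum (par U) (par V)) ->
     cF (par U) (par V) < 1 /\
     exists M : R, forall n : nat,
       hnorm (hsub (proj U (Nat.iter n T x)) (proj (inter U (translate v V)) x))
         <= M * (cF (par U) (par V)) ^ n).
Proof.
  intros T v Hv.
  assert (Hran_ne : exists a, ran_Id_minus T a) by (exists (hsub hzero (T hzero)); exists hzero; auto).
  destruct (nearest_closure_exists (ran_Id_minus T) hzero Hran_ne (ran_affine U V hU hV)) as [p [Hp Hpn]].
  assert (Hnv : nearest (closure (ran_Id_minus T)) hzero v).
  { apply proj_spec. exists p. split; auto. }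
  destruct Hnv as [_ Hvmin].
  assert (Hmin : forall a, ran_Id_minus T a -> hinner v (hsub a v) = 0).
  { intros a Ha.
    pose proof (nearest_orth (ran_Id_minus T) hzero v (ran_affine U V hU hV) Hv
      (fun c Hc => proj1 (norm_le_iff _ _) (Hvmin c (closure_incl _ _ Hc))) a Ha) as H.
    replace (hsub hzero v) with (hopp v) in H by vring. rewrite inner_opp_l in H. lra. }
  destruct (v_perp U V hU hV v Hv Hmin) as [HvU HvV].
  assert (Hit1 : forall n, Nat.iter n (Tshift T v) x = hadd (Nat.iter n T x) (hscal (INR n) v)).
  { intro n. unfold Tshift, T. apply iter_shift; auto. }
  assert (Hit2 : forall n, Nat.iter n (DR U (translate v V)) x = Nat.iter n (Tshift T v) x).
  { intro n. apply iter_ext. intro y. rewrite DR_translate by auto. unfold Tshift, T.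
    rewrite DR_shift; auto. }
  assert (HPn : forall n, proj U (hadd (Nat.iter n T x) (hscal (INR n) v)) = proj U (Nat.iter n T x)).
  { intro n. apply proj_shift; auto. apply Perp_scal; auto. }
  assert (Hpart1 : forall n,
     proj U (Nat.iter n T x) = proj U (hadd (Nat.iter n T x) (hscal (INR n) v)) /\
     proj U (hadd (Nat.iter n T x) (hscal (INR n) v)) = proj U (Nat.iter n (Tshift T v) x) /\
     proj U (Nat.iter n (Tshift T v) x) = proj U (Nat.iter n (DR U (translate v V)) x) /\
     proj U (Nat.iter n (DR U (translate v V)) x)
       = resolvent_shift v U (Nat.iter n (Tshift T v) x)).
  { intro n. split; [rewrite HPn; auto|]. split; [rewrite Hit1; auto|].
    split; [rewrite Hit2; auto|]. rewrite resolvent_eq, Hit2; auto. }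
  split; [exact Hpart1|].
  destruct Hv as [z0 Hz0].
  set (z := proj U z0).
  assert (HzU : U z) by apply (closed_affine_proj U z0 hU).
  set (V' := translate v V).
  assert (hV' : closed_affine V') by (apply translate_closed_affine; auto).
  assert (HzV' : V' z).
  { exists (proj V (hsub (hscal 2 z) z0)). split.
    - apply (closed_affine_proj V _ hV).
    - rewrite Hz0. unfold T, DR. fold z. vring. }
  assert (HzI : inter U V' z) by (split; auto).
  assert (hI : closed_affine (inter U V')) by (apply (inter_closed_affine U V' z); auto).
  set (M := mkLP U z hU HzU). set (N := mkLP V' z hV' HzV'). set (W := mkLP (inter U V') z hI HzI).
  assert (HC1 : forall y, DR U V' (hadd z y) = hadd z (Tl M N y)).
  { intro y. unfold DR, Tl.
    rewrite (proj_via_dir U z hU HzU (hadd z y)). fold M.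
    replace (hsub (hadd z y) z) with y by vring.
    rewrite (proj_via_dir V' z hV' HzV'). fold N.
    replace (hsub (hsub (hscal 2 (hadd z (lP M y))) (hadd z y)) z) with
      (hsub (hscal 2 (lP M y)) y) by vring.
    vring. }
  assert (HC2 : forall n y, Nat.iter n (DR U V') (hadd z y) = hadd z (Tn M N n y)).
  { induction n; intro y. simpl. auto. simpl Nat.iter. rewrite IHn, HC1. auto. }
  set (y0 := hsub x z).
  assert (Hx : x = hadd z y0) by (unfold y0; vring).
  assert (Hkey : forall n, proj U (Nat.iter n T x) = hadd z (lP M (Tn M N n y0))).
  { intro n. destruct (Hpart1 n) as [E1 [E2 [E3 _]]]. rewrite E1, E2, E3. fold V'.
    rewrite Hx, HC2. rewrite (proj_via_dir U z hU HzU). fold M.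
    replace (hsub (hadd z (Tn M N n y0)) z) with (Tn M N n y0) by vring. auto. }
  destruct (fix_decomp M N y0) as [f [g [Hy0 [Hf Hg]]]].
  set (a := lP M f).
  destruct (Tl_fix M N f Hf) as [Ha _]. fold a in Ha.
  assert (Hlim : proj (inter U V') x = hadd z a).
  { apply proj_eq.
    - split. exact (lPin M f). change (lS N a). rewrite <- Ha. apply lPin.
    - intros c [HcU HcV].
      assert (HcM : lS M (hsub c z)).
      { change (U (hadd z (hsub c z))). replace (hadd z (hsub c z)) with c by vring. auto. }
      assert (HcN : lS N (hsub c z)).
      { change (V' (hadd z (hsub c z))). replace (hadd z (hsub c z)) with c by vring. auto. }
      assert (HaM : lS M a) by apply lPin.
      assert (HaN : lS N a) by (rewrite <- Ha; apply lPin).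
      set (e := hsub (hsub c z) a).
      assert (HeM : lS M e) by (apply lSsub; auto).
      assert (HeN : lS N e) by (apply lSsub; auto).
      replace (hsub x (hadd z a)) with (hadd (hsub f a) g) by (rewrite Hx, Hy0; vring).
      replace (hsub c (hadd z a)) with e by (unfold e; vring).
      rewrite hinner_add_l. unfold a. rewrite lPorth by auto.
      rewrite (closure_ranIT_perp M N g Hg e (fixW M N e HeM HeN)). ring. }
  assert (Hdiff : forall n, hsub (proj U (Nat.iter n T x)) (proj (inter U V') x) = lP M (Tn M N n g)).
  { intro n. rewrite Hkey, Hlim, Hy0, Tn_add, (Tn_fix M N n f Hf), P_add. fold a. vring. }
  split.
  - intros eps He. destruct (strong_conv M N g Hg eps He) as [K HK]. exists K. intros n Hn.
    fold V'. rewrite Hdiff. eapply Rle_lt_trans; [apply normP_le|]. apply HK; auto.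
  - intros Hcl.
    assert (HparU : forall e, par U e <-> lS M e) by (intro e; apply par_iff; auto).
    assert (HparV : forall e, par V e <-> lS N e).
    { intro e. rewrite <- (par_translate v V e). apply par_iff; auto. }
    assert (HMc : is_closed (lS M)) by (apply dir_closed; auto).
    assert (HNc : is_closed (lS N)) by (apply dir_closed; auto).
    assert (Hsc : is_closed (SumMN M N)).
    { apply (closed_iff (msum (par U) (par V))); auto.
      intro q. split.
      - intros [m [n [Hm [Hn ->]]]]. exists m, n. rewrite <- HparU, <- HparV. auto.
      - intros [m [n [Hm [Hn ->]]]]. exists m, n. rewrite HparU, HparV. auto. }
    assert (Hperp : forall u, orth_compl (inter (par U) (par V)) u <-> perpW M N u).
    { intro u. split.
      - intros H e HM HN. apply H. split; [apply HparU|apply HparV]; auto.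
      - intros H e [HM HN]. apply H; [apply HparU|apply HparV]; auto. }
    assert (Hlub : is_lub (Sc M N) (cF (par U) (par V))).
    { apply (lub_iff (cF_set (par U) (par V))).
      - intro r. split.
        + intros [u [w [H1 [H2 [H3 [H4 [H5 [H6 H7]]]]]]]]. exists u, w.
          rewrite <- HparU, <- HparV, <- !Hperp. auto 10.
        + intros [u [w [H1 [H2 [H3 [H4 [H5 [H6 H7]]]]]]]]. exists u, w.
          rewrite HparU, HparV, !Hperp. auto 10.
      - apply cF_is_lub. apply HparU, lS0. apply HparV, lS0. }
    set (c := cF (par U) (par V)) in *.
    assert (Hc1 : c < 1) by (apply (cf_lt1 M N HMc HNc Hsc c Hlub)).
    destruct (Sc_bound M N c Hlub) as [Hc0 Hcf].
    split; auto.
    exists (hnorm g). intro n. fold V'. rewrite Hdiff.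
    eapply Rle_trans; [apply normP_le|].
    rewrite Rmult_comm.
    apply (contract_norm M N W); auto.
    + intro e. unfold W, M, N. simpl. unfold dirS, inter. tauto.
    + apply closure_ranIT_perp; auto.
Qed.

Theorem theorem4p4 (X : HilbertSpace) (U V : X -> Prop)
  (hU : closed_affine U) (hV : closed_affine V) (x : X) :
  let T := DR U V in
  let v := proj (closure (ran_Id_minus T)) hzero in
  ran_Id_minus T v ->
  (forall n : nat,
     proj U (Nat.iter n T x) = proj U (hadd (Nat.iter n T x) (hscal (INR n) v)) /\
     proj U (hadd (Nat.iter n T x) (hscal (INR n) v)) = proj U (Nat.iter n (Tshift T v) x) /\
     proj U (Nat.iter n (Tshift T v) x) = proj U (Nat.iter n (DR U (translate v V)) x) /\
     proj U (Nat.iter n (DR U (translate v V)) x)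
       = resolvent_shift v U (Nat.iter n (Tshift T v) x)) /\
  converges (fun n => proj U (Nat.iter n T x)) (proj (inter U (translate v V)) x) /\
  (is_closed (msum (par U) (par V)) ->
     cF (par U) (par V) < 1 /\
     exists M : R, forall n : nat,
       hnorm (hsub (proj U (Nat.iter n T x)) (proj (inter U (translate v V)) x))
         <= M * (cF (par U) (par V)) ^ n).
Proof.
  exact (main_thm X U V hU hV x).
Qed.
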